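(* Let $\omega\colon\mathbf Z_+\to(0,+\infty)$ be a weight which is bounded from below, such that $\omega(k2^n)\to+\infty$ as $n\to+\infty$ for every $k\ge3$, and such that $\mathcal T$ is a bounded operator on $\mathcal X_\omega$. Then $\mathcal T$ is hypercyclic on $\mathcal X_\omega$, i.e. there exists $f\in\mathcal X_\omega$ whose orbit $\{\mathcal T^nf;\ n\ge0\}$ is dense in $\mathcal X_\omega$. In particular, $\mathcal T$ is hypercyclic on $\mathcal X_{\omega_0}$, where $\omega_0(n)=(n+1)/\pi$.
   Context: $T\colon\mathbf Z_+\to\mathbf Z_+$ is the modified Collatz map: $T(n)=n/2$ for $n$ even, $T(n)=(3n+1)/2$ for $n$ odd. $\mathcal X_\omega$ is the Hilbert space of holomorphic functions $f(z)=\sum_{n\ge3}c_nz^n$ on the unit disk with $\|f\|_\omega^2=\sum_{n\ge3}|c_n|^2/\omega(n)<\infty$ (the quotient of the weighted Bergman space $\mathcal B^2_\omega$ by $\mathrm{span}[1,z,z^2]$). $\mathcal T\sum_{n\ge3}c_nz^n=\sum_{j\ge3,\,T(j)\ge3}c_jz^{T(j)}$. $\mathcal T$ is bounded on $\mathcal X_\omega$ iff the sequences $\omega(6m)/\omega(3m)$, $\omega(6m+2)/\omega(3m+1)$, $(\omega(6m+4)+\omega(2m+1))/\omega(3m+2)$ ($m\ge1$) are bounded; this holds for $\omega_0$. *)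

(* Defs.v *)
From Stdlib Require Import Reals List Arith.
From Coquelicot Require Import Coquelicot.
Open Scope R_scope.

Definition collatz (n : nat) : nat :=
  if Nat.even n then Nat.div2 n else Nat.div2 (3 * n + 1).

(* Elements of X_omega are represented by their Taylor coefficient sequences
   c : nat -> C with c n = 0 for n < 3 (f(z) = sum_{n>=3} c_n z^n). *)
Definition in_X (omega : nat -> R) (c : nat -> C) : Prop :=
  (forall n, (n < 3)%nat -> c n = 0%C) /\
  ex_series (fun n => (Cmod (c n)) ^ 2 / omega n).

Definition normX (omega : nat -> R) (c : nat -> C) : R :=
  sqrt (Series (fun n => (Cmod (c n)) ^ 2 / omega n)).

Definition Csub_seq (c d : nat -> C) : nat -> C := fun n => (c n - d n)%C.

(* The operator  T (sum c_n z^n) = sum_{j>=3, T(j)>=3} c_j z^{T(j)}.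
   The coefficient of z^m (m >= 3) is the sum of c_j over j >= 3 with
   collatz j = m; all such j satisfy j <= 2m, so the sum ranges over 3..2m. *)
Definition Top (c : nat -> C) : nat -> C :=
  fun m =>
    if (m <? 3)%nat then 0%C
    else fold_right Cplus 0%C
           (map c (filter (fun j => Nat.eqb (collatz j) m) (seq 3 (2 * m - 2)))).

Definition bounded_on_X (omega : nat -> R) : Prop :=
  exists M : R, forall c, in_X omega c ->
    in_X omega (Top c) /\ normX omega (Top c) <= M * normX omega c.

Definition hypercyclic_on_X (omega : nat -> R) : Prop :=
  exists f, in_X omega f /\
    forall g, in_X omega g -> forall eps : R, 0 < eps ->
      exists n : nat, normX omega (Csub_seq g (Nat.iter n Top f)) < eps.

Definition omega0 (n : nat) : R := (INR n + 1) / PI.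

(* Main.v *)
Require Import Defs.
From Stdlib Require Import Reals List Arith.
From Coquelicot Require Import Coquelicot.
From Stdlib Require Import Lia Lra FunctionalExtensionality ClassicalEpsilon Classical.
From Stdlib Require Import Arith.Cantor ZArith ZifyNat.
Open Scope R_scope.

Fixpoint rsum (n : nat) (f : nat -> R) : R :=
  match n with O => 0 | S n => rsum n f + f n end.
Fixpoint csum (n : nat) (f : nat -> C) : C :=
  match n with O => 0%C | S n => (csum n f + f n)%C end.

Lemma rsum_ext n f g : (forall i, (i < n)%nat -> f i = g i) -> rsum n f = rsum n g.
Proof. induction n; simpl; intros H; [reflexivity|].
  rewrite IHn by (intros; apply H; lia). rewrite H by lia. reflexivity. Qed.
Lemma rsum_le n f g : (forall i, (i<n)%nat -> f i <= g i) -> rsum n f <= rsum n g.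
Proof. induction n; simpl; intros H; [lra|].
  assert (rsum n f <= rsum n g) by (apply IHn; intros; apply H; lia).
  assert (f n <= g n) by (apply H; lia). lra. Qed.
Lemma rsum_nonneg n f : (forall i, (i<n)%nat -> 0 <= f i) -> 0 <= rsum n f.
Proof. induction n; simpl; intros H; [lra|].
  assert (0 <= rsum n f) by (apply IHn; intros; apply H; lia).
  assert (0 <= f n) by (apply H; lia). lra. Qed.
Lemma rsum_plus n f g : rsum n (fun i => f i + g i) = rsum n f + rsum n g.
Proof. induction n; simpl; [lra|]. rewrite IHn; lra. Qed.
Lemma rsum_scal n c f : rsum n (fun i => c * f i) = c * rsum n f.
Proof. induction n; simpl; [lra|]. rewrite IHn; lra. Qed.
Lemma rsum_zero n f : (forall i, (i<n)%nat -> f i = 0) -> rsum n f = 0.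
Proof. intros H. rewrite (rsum_ext n f (fun _ => 0)) by auto.
  induction n; simpl; [lra|]. rewrite IHn by (intros; apply H; lia). lra. Qed.
Lemma rsum_shift n f : rsum (S n) f = f 0%nat + rsum n (fun i => f (S i)).
Proof. induction n; simpl in *; [lra|]. rewrite IHn. lra. Qed.
Lemma rsum_mono n m f : (n <= m)%nat -> (forall i, 0 <= f i) -> rsum n f <= rsum m f.
Proof. intros H Hf. induction H; [lra|]. simpl. specialize (Hf m). lra. Qed.
Lemma rsum_swap n m F : rsum n (fun p => rsum m (fun i => F i p)) = rsum m (fun i => rsum n (fun p => F i p)).
Proof. induction n; simpl. - symmetry; apply rsum_zero; auto.
  - rewrite IHn. rewrite <- rsum_plus. reflexivity. Qed.
Lemma rsum_cut n m f : (m <= n)%nat -> (forall i, (m <= i)%nat -> (i < n)%nat -> f i = 0) -> rsum n f = rsum m f.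
Proof. intros H; induction H; intros Hf; [reflexivity|]. simpl.
  rewrite IHle by (intros; apply Hf; lia). rewrite (Hf m0) by lia. lra. Qed.
Lemma rsum_single n b c : rsum n (fun p => if Nat.eqb p b then c else 0) = if Nat.ltb b n then c else 0.
Proof. induction n; simpl; [destruct b; reflexivity|]. rewrite IHn.
  destruct (Nat.eqb_spec n b); destruct (Nat.ltb_spec b n); destruct (Nat.ltb_spec b (S n)); try lia; lra. Qed.
Lemma rsum_double n f : rsum (2*n) f = rsum n (fun i => f (2*i)%nat) + rsum n (fun i => f (2*i+1)%nat).
Proof. induction n; [simpl; lra|]. replace (2 * S n)%nat with (S (S (2*n)))%nat by lia.
  change (rsum (S (S (2*n))) f) with (rsum (2*n) f + f (2*n)%nat + f (S (2*n))).
  rewrite IHn. cbn [rsum]. replace (S (2*n)) with (2*n+1)%nat by lia. lra. Qed.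
Lemma rsum_triple n f : rsum (3*n) f = rsum n (fun i => f (3*i)%nat + f (3*i+1)%nat + f (3*i+2)%nat).
Proof. induction n; [simpl; lra|]. replace (3 * S n)%nat with (S (S (S (3*n))))%nat by lia.
  change (rsum (S (S (S (3*n)))) f) with (rsum (3*n) f + f (3*n)%nat + f (S (3*n)) + f (S (S (3*n)))).
  rewrite IHn. cbn [rsum]. replace (S (3*n)) with (3*n+1)%nat by lia.
  replace (S (3*n+1)) with (3*n+2)%nat by lia. lra. Qed.
Lemma rsum_const n c : rsum n (fun _ => c) = INR n * c.
Proof. induction n; simpl rsum; [simpl; lra|]. rewrite IHn, S_INR. lra. Qed.
Lemma rsum_geom r : 0 <= r <= /2 -> forall n, rsum n (fun i => r^i) <= 2 - 2 * r ^ n.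
Proof. intros Hr n; induction n; simpl; [lra|].
  assert (0 <= r^n) by (apply pow_le; lra). nra. Qed.
Lemma rsum_geom2 r : 0 <= r <= /2 -> forall n, rsum n (fun i => r^i) <= 2.
Proof. intros Hr n. pose proof (rsum_geom r Hr n). assert (0 <= r^n) by (apply pow_le; lra). lra. Qed.
Lemma rsum_sum_n a n : sum_n a n = rsum (S n) a.
Proof. induction n; simpl. - rewrite sum_O. simpl; lra.
  - rewrite sum_Sn, IHn. simpl. reflexivity. Qed.

Lemma csum_ext n (f g : nat -> C) : (forall i, (i < n)%nat -> f i = g i) -> csum n f = csum n g.
Proof. induction n; simpl; intros H; [reflexivity|].
  rewrite IHn by (intros; apply H; lia). rewrite H by lia. reflexivity. Qed.
Lemma csum_plus n (f g : nat -> C) : csum n (fun i => f i + g i)%C = (csum n f + csum n g)%C.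
Proof. induction n; simpl; [ring|]. rewrite IHn; ring. Qed.
Lemma csum_scal n (c : C) (f : nat -> C) : csum n (fun i => c * f i)%C = (c * csum n f)%C.
Proof. induction n; simpl; [ring|]. rewrite IHn; ring. Qed.
Lemma csum_zero n (f : nat -> C) : (forall i, (i<n)%nat -> f i = 0%C) -> csum n f = 0%C.
Proof. induction n; simpl; intros H; [reflexivity|].
  rewrite IHn by (intros; apply H; lia). rewrite H by lia. ring. Qed.
Lemma csum_shift n (f : nat -> C) : csum (S n) f = (f 0%nat + csum n (fun i => f (S i)))%C.
Proof. induction n; simpl in *; [ring|]. rewrite IHn. ring. Qed.
Lemma csum_cut n m (f : nat -> C) : (m <= n)%nat -> (forall i, (m <= i)%nat -> (i < n)%nat -> f i = 0%C) -> csum n f = csum m f.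
Proof. intros H; induction H; intros Hf; [reflexivity|]. simpl.
  rewrite IHle by (intros; apply Hf; lia). rewrite (Hf m0) by lia. ring. Qed.
Lemma csum_single n b (c : C) : csum n (fun p => if Nat.eqb p b then c else 0%C) = if Nat.ltb b n then c else 0%C.
Proof. induction n; simpl; [destruct b; reflexivity|]. rewrite IHn.
  destruct (Nat.eqb_spec n b); destruct (Nat.ltb_spec b n); destruct (Nat.ltb_spec b (S n)); try lia; ring. Qed.
Lemma csum_RtoC n f : csum n (fun i => RtoC (f i)) = RtoC (rsum n f).
Proof. induction n; simpl; [reflexivity|]. rewrite IHn. rewrite RtoC_plus. reflexivity. Qed.

Lemma Cmod_sq_add (a b : C) : Cmod (a + b) ^ 2 <= 2 * Cmod a ^ 2 + 2 * Cmod b ^ 2.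
Proof. pose proof (Cmod_triangle a b). pose proof (Cmod_ge_0 (a+b)).
  pose proof (Cmod_ge_0 a). pose proof (Cmod_ge_0 b).
  assert (Cmod (a+b) ^ 2 <= (Cmod a + Cmod b) ^ 2) by (apply pow_incr; lra).
  assert (0 <= (Cmod a - Cmod b)^2) by (apply pow2_ge_0). nra. Qed.
Lemma Cmod_sq_sub (a b : C) : Cmod (a - b) ^ 2 <= 2 * Cmod a ^ 2 + 2 * Cmod b ^ 2.
Proof. unfold Cminus. pose proof (Cmod_sq_add a (-b)). rewrite Cmod_opp in H. exact H. Qed.

Lemma csum_CS n z : Cmod (csum n z) ^ 2 <= rsum n (fun i => 2 ^ (S i) * Cmod (z i) ^ 2).
Proof. revert z; induction n; intros z.
  - simpl. rewrite Cmod_0. lra.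
  - rewrite csum_shift, rsum_shift.
    eapply Rle_trans; [apply Cmod_sq_add|].
    specialize (IHn (fun i => z (S i))).
    assert (E : rsum n (fun i => 2 ^ S (S i) * Cmod (z (S i)) ^ 2) = 2 * rsum n (fun i => 2 ^ S i * Cmod (z (S i)) ^ 2)).
    { rewrite <- rsum_scal. apply rsum_ext. intros; simpl; lra. }
    cbv beta in IHn. rewrite E. replace (2^1) with 2 by ring. lra. Qed.

Lemma series_bound (a : nat -> R) B : (forall n, 0 <= a n) -> (forall n, rsum n a <= B) -> ex_series a /\ Series a <= B.
Proof.
  intros Ha HB.
  assert (Hf : ex_finite_lim_seq (sum_n a)).
  { apply ex_finite_lim_seq_incr with B.
    - intros n. rewrite !rsum_sum_n. cbn [rsum]. specialize (Ha (S n)). lra.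
    - intros n. rewrite rsum_sum_n. apply HB. }
  destruct Hf as [l Hl].
  split. exists l. exact Hl.
  unfold Series. rewrite (is_lim_seq_unique _ _ Hl). simpl.
  pose proof (is_lim_seq_le (sum_n a) (fun _ => B) l B) as H.
  simpl in H. apply H; [intros n; rewrite rsum_sum_n; apply HB | exact Hl | apply is_lim_seq_const].
Qed.

Lemma partial_le_series (a : nat -> R) : (forall n, 0 <= a n) -> ex_series a -> forall n, rsum n a <= Series a.
Proof.
  intros Ha Hex n. pose proof (Series_correct _ Hex) as Hs.
  pose proof (is_lim_seq_le_loc (fun _ => rsum n a) (sum_n a) (rsum n a) (Series a)) as H.
  simpl in H. apply H; [|apply is_lim_seq_const| exact Hs].
  exists n. intros m Hm. rewrite rsum_sum_n. apply rsum_mono; auto; lia.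
Qed.

Lemma series_nonneg (a : nat -> R) : (forall n, 0 <= a n) -> ex_series a -> 0 <= Series a.
Proof. intros Ha Hex. pose proof (partial_le_series a Ha Hex 0). simpl in H. lra. Qed.

Definition wsq (om : nat -> R) (x : nat -> C) (p : nat) : R := Cmod (x p) ^ 2 / om p.
Definition Z3 (x : nat -> C) := forall n, (n < 3)%nat -> x n = 0%C.
Definition nsq (om : nat -> R) (x : nat -> C) := Series (wsq om x).

Lemma normX_nsq om x : normX om x = sqrt (nsq om x).
Proof. reflexivity. Qed.
Lemma in_X_iff om x : in_X om x <-> Z3 x /\ ex_series (wsq om x).
Proof. reflexivity. Qed.

Section WithOmega.
Variable om : nat -> R.
Hypothesis Hpos : forall n, (1 <= n)%nat -> 0 < om n.

Lemma wsq_nonneg x p : Z3 x -> 0 <= wsq om x p.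
Proof. intros Hz. unfold wsq. destruct (Nat.lt_ge_cases p 3).
  - rewrite Hz by lia. rewrite Cmod_0. simpl. unfold Rdiv. lra.
  - apply Rdiv_le_0_compat. apply pow2_ge_0. apply Hpos; lia. Qed.

Lemma nsq_nonneg x : in_X om x -> 0 <= nsq om x.
Proof. intros [Hz He]. apply series_nonneg; auto. intros; apply wsq_nonneg; auto. Qed.

Lemma wsq_Z3 x p : Z3 x -> (p < 3)%nat -> wsq om x p = 0.
Proof. intros Hz Hp. unfold wsq. rewrite Hz by lia. rewrite Cmod_0. simpl. unfold Rdiv. lra. Qed.

Lemma wsq_le_comb x y z c1 c2 : Z3 x -> Z3 y -> Z3 z -> 0 <= c1 -> 0 <= c2 ->
  (forall p, (3 <= p)%nat -> Cmod (x p) ^ 2 <= c1 * Cmod (y p) ^ 2 + c2 * Cmod (z p) ^ 2) ->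
  forall p, wsq om x p <= c1 * wsq om y p + c2 * wsq om z p.
Proof. intros Hx Hy Hz H1 H2 H p. destruct (Nat.lt_ge_cases p 3).
  - rewrite !wsq_Z3 by auto. lra.
  - unfold wsq. assert (0 < om p) by (apply Hpos; lia). specialize (H p H0).
    unfold Rdiv. apply Rmult_le_compat_r with (r := / om p) in H; [|left; apply Rinv_0_lt_compat; auto].
    lra. Qed.

Lemma nsq_comb x y z c1 c2 : Z3 x -> in_X om y -> in_X om z -> 0 <= c1 -> 0 <= c2 ->
  (forall p, (3 <= p)%nat -> Cmod (x p) ^ 2 <= c1 * Cmod (y p) ^ 2 + c2 * Cmod (z p) ^ 2) ->
  in_X om x /\ nsq om x <= c1 * nsq om y + c2 * nsq om z.
Proof. intros Hx [Hy Ey] [Hz Ez] H1 H2 H.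
  assert (B : ex_series (wsq om x) /\ Series (wsq om x) <= c1 * nsq om y + c2 * nsq om z).
  { apply series_bound. intros; apply wsq_nonneg; auto.
    intros n. eapply Rle_trans. apply rsum_le. intros i _. apply (wsq_le_comb x y z c1 c2); auto.
    rewrite rsum_plus, !rsum_scal.
    pose proof (partial_le_series (wsq om y) (fun p => wsq_nonneg y p Hy) Ey n).
    pose proof (partial_le_series (wsq om z) (fun p => wsq_nonneg z p Hz) Ez n).
    unfold nsq. nra. }
  destruct B; split; [split|]; auto. Qed.

Definition csub (x y : nat -> C) : nat -> C := fun p => (x p - y p)%C.
Definition cadd (x y : nat -> C) : nat -> C := fun p => (x p + y p)%C.

Lemma Z3_csub x y : Z3 x -> Z3 y -> Z3 (csub x y).
Proof. intros Hx Hy n Hn. unfold csub. rewrite Hx, Hy by auto. ring. Qed.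
Lemma Z3_cadd x y : Z3 x -> Z3 y -> Z3 (cadd x y).
Proof. intros Hx Hy n Hn. unfold cadd. rewrite Hx, Hy by auto. ring. Qed.

Lemma nsq_sub x y : in_X om x -> in_X om y -> in_X om (csub x y) /\ nsq om (csub x y) <= 2 * nsq om x + 2 * nsq om y.
Proof. intros Hx Hy. pose proof Hx as [Zx Ex]; pose proof Hy as [Zy Ey].
  apply nsq_comb; [apply Z3_csub; auto | auto | auto | lra | lra | intros p _; apply Cmod_sq_sub]. Qed.
Lemma nsq_add x y : in_X om x -> in_X om y -> in_X om (cadd x y) /\ nsq om (cadd x y) <= 2 * nsq om x + 2 * nsq om y.
Proof. intros Hx Hy. pose proof Hx as [Zx Ex]; pose proof Hy as [Zy Ey].
  apply nsq_comb; [apply Z3_cadd; auto | auto | auto | lra | lra | intros p _; apply Cmod_sq_add]. Qed.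

Lemma nsq_partial x B : Z3 x -> (forall n, rsum n (wsq om x) <= B) -> in_X om x /\ nsq om x <= B.
Proof. intros Hz H. destruct (series_bound (wsq om x) B) as [E S]; auto.
  intros; apply wsq_nonneg; auto. split; [split|]; auto. Qed.

Lemma nsq_partial_le x : in_X om x -> forall n, rsum n (wsq om x) <= nsq om x.
Proof. intros [Hz E] n. apply partial_le_series; auto. intros; apply wsq_nonneg; auto. Qed.

End WithOmega.

Lemma fold_filter (P : nat -> bool) (c : nat -> C) n : forall a,
  fold_right Cplus 0%C (map c (filter P (seq a n))) = csum n (fun i => if P (a+i)%nat then c (a+i)%nat else 0%C).
Proof. induction n; intros a; [reflexivity|].
  rewrite csum_shift. simpl seq. simpl filter. rewrite Nat.add_0_r.
  rewrite (csum_ext n _ (fun i => if P (S a + i)%nat then c (S a + i)%nat else 0%C))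
    by (intros; rewrite Nat.add_succ_r; reflexivity).
  rewrite <- IHn. destruct (P a); simpl; ring. Qed.

Lemma Top_eq c m : Top c m = if (m <? 3)%nat then 0%C else
   csum (2*m-2) (fun i => if Nat.eqb (collatz (3+i)) m then c (3+i)%nat else 0%C).
Proof. unfold Top. destruct (m <? 3)%nat; [reflexivity|]. apply fold_filter. Qed.

Definition zero : nat -> C := fun _ => 0%C.
Definition cscal (k : C) (x : nat -> C) : nat -> C := fun p => (k * x p)%C.
Definition seqsum n (X : nat -> nat -> C) : nat -> C := fun p => csum n (fun i => X i p).

Lemma Top_cadd x y : Top (cadd x y) = cadd (Top x) (Top y).
Proof. apply functional_extensionality; intros m. unfold cadd. rewrite !Top_eq.
  destruct (m <? 3)%nat; [ring|]. rewrite <- csum_plus. apply csum_ext; intros.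
  destruct (collatz (3+i) =? m)%nat; ring. Qed.
Lemma Top_cscal k x : Top (cscal k x) = cscal k (Top x).
Proof. apply functional_extensionality; intros m. unfold cscal. rewrite !Top_eq.
  destruct (m <? 3)%nat; [ring|]. rewrite <- csum_scal. apply csum_ext; intros.
  destruct (collatz (3+i) =? m)%nat; ring. Qed.
Lemma Top_zero : Top zero = zero.
Proof. apply functional_extensionality; intros m. rewrite !Top_eq. unfold zero; cbv beta.
  destruct (m <? 3)%nat; [ring|]. apply csum_zero; intros.
  destruct (collatz (3+i) =? m)%nat; ring. Qed.
Lemma Top_csub x y : Top (csub x y) = csub (Top x) (Top y).
Proof. apply functional_extensionality; intros m. unfold csub. rewrite !Top_eq.
  destruct (m <? 3)%nat; [ring|].
  rewrite (csum_ext _ _ (fun i => (if Nat.eqb (collatz (3+i)) m then x (3+i)%nat else 0%C) + (-1) * (if Nat.eqb (collatz (3+i)) m then y (3+i)%nat else 0%C))%C).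
  rewrite csum_plus, csum_scal. ring.
  intros; destruct (collatz (3+i) =? m)%nat; ring. Qed.
Lemma seqsum_S n X : seqsum (S n) X = cadd (seqsum n X) (X n).
Proof. reflexivity. Qed.
Lemma seqsum_0 X : seqsum 0 X = zero.
Proof. reflexivity. Qed.
Lemma Top_seqsum n X : Top (seqsum n X) = seqsum n (fun i => Top (X i)).
Proof. induction n. - rewrite !seqsum_0. apply Top_zero.
  - rewrite !seqsum_S, Top_cadd, IHn. reflexivity. Qed.

Definition Tn (k : nat) (x : nat -> C) := Nat.iter k Top x.
Lemma Tn_S k x : Tn (S k) x = Tn k (Top x).
Proof. unfold Tn. apply Nat.iter_succ_r. Qed.
Lemma Tn_S' k x : Tn (S k) x = Top (Tn k x).
Proof. reflexivity. Qed.
Lemma Tn_add a b x : Tn (a + b) x = Tn a (Tn b x).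
Proof. unfold Tn. apply Nat.iter_add. Qed.
Lemma Tn_cadd k x y : Tn k (cadd x y) = cadd (Tn k x) (Tn k y).
Proof. induction k; [reflexivity|]. rewrite !Tn_S', IHk. apply Top_cadd. Qed.
Lemma Tn_csub k x y : Tn k (csub x y) = csub (Tn k x) (Tn k y).
Proof. induction k; [reflexivity|]. rewrite !Tn_S', IHk. apply Top_csub. Qed.
Lemma Tn_cscal k c x : Tn k (cscal c x) = cscal c (Tn k x).
Proof. induction k; [reflexivity|]. rewrite !Tn_S', IHk. apply Top_cscal. Qed.
Lemma Tn_zero k : Tn k zero = zero.
Proof. induction k; [reflexivity|]. rewrite !Tn_S', IHk. apply Top_zero. Qed.
Lemma Tn_seqsum k n X : Tn k (seqsum n X) = seqsum n (fun i => Tn k (X i)).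
Proof. induction k; [reflexivity|]. rewrite !Tn_S', IHk. apply Top_seqsum. Qed.
Lemma Tn_iter k x : Nat.iter k Top x = Tn k x.
Proof. reflexivity. Qed.

Lemma collatz_even h : collatz (2*h) = h.
Proof. unfold collatz. rewrite Nat.even_even. apply Nat.div2_double. Qed.
Lemma collatz_odd h : collatz (2*h+1) = (3*h+2)%nat.
Proof. unfold collatz. rewrite Nat.even_odd. replace (3 * (2*h+1) + 1)%nat with (2*(3*h+2))%nat by lia.
  apply Nat.div2_double. Qed.
Lemma even_or_odd j : (exists h, j = 2*h)%nat \/ (exists h, j = 2*h+1)%nat.
Proof. destruct (Nat.Even_or_Odd j) as [[h H]|[h H]]; [left|right]; exists h; lia. Qed.
Lemma collatz_le j : (j <= 2 * collatz j)%nat.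
Proof. destruct (even_or_odd j) as [[h ->]|[h ->]]; [rewrite collatz_even|rewrite collatz_odd]; lia. Qed.

Definition dbl (x : nat -> C) : nat -> C := fun p => if Nat.even p then x (Nat.div2 p) else 0%C.
Lemma dbl_even x h : dbl x (2*h) = x h.
Proof. unfold dbl. rewrite Nat.even_even, Nat.div2_double. reflexivity. Qed.
Lemma dbl_odd x h : dbl x (2*h+1) = 0%C.
Proof. unfold dbl. rewrite Nat.even_odd. reflexivity. Qed.

Lemma Z3_dbl x : Z3 x -> Z3 (dbl x).
Proof. intros Hx n Hn. destruct (even_or_odd n) as [[h ->]|[h ->]].
  - rewrite dbl_even. apply Hx; lia. - apply dbl_odd. Qed.

Lemma Top_dbl x : Z3 x -> Top (dbl x) = x.
Proof. intros Hx. apply functional_extensionality; intros m. rewrite Top_eq.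
  destruct (Nat.ltb_spec m 3). { symmetry; apply Hx; lia. }
  rewrite (csum_ext _ _ (fun i => if Nat.eqb i (2*m-3) then x m else 0%C)).
  - rewrite csum_single. destruct (Nat.ltb_spec (2*m-3) (2*m-2)); [reflexivity|lia].
  - intros i Hi. destruct (even_or_odd (3+i)) as [[h Hh]|[h Hh]]; rewrite Hh.
    + rewrite collatz_even, dbl_even. destruct (Nat.eqb_spec h m); destruct (Nat.eqb_spec i (2*m-3)); subst; try lia; reflexivity.
    + rewrite collatz_odd, dbl_odd. destruct (Nat.eqb_spec (3*h+2) m); destruct (Nat.eqb_spec i (2*m-3)); try lia; reflexivity.
Qed.

Definition e (b : nat) : nat -> C := fun p => if Nat.eqb p b then 1%C else 0%C.
Lemma Z3_e b : (3 <= b)%nat -> Z3 (e b).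
Proof. intros Hb n Hn. unfold e. destruct (Nat.eqb_spec n b); [lia|reflexivity]. Qed.

Lemma Top_e b : (3 <= b)%nat -> Top (e b) = if (collatz b <? 3)%nat then zero else e (collatz b).
Proof. intros Hb. apply functional_extensionality; intros m. rewrite Top_eq.
  destruct (Nat.ltb_spec m 3).
  - destruct (Nat.ltb_spec (collatz b) 3); [reflexivity|]. unfold e. destruct (Nat.eqb_spec m (collatz b)); [lia|reflexivity].
  - rewrite (csum_ext _ _ (fun i => if Nat.eqb i (b-3) then (if Nat.eqb (collatz b) m then 1%C else 0%C) else 0%C)).
    + rewrite csum_single. pose proof (collatz_le b).
      destruct (Nat.eqb_spec (collatz b) m).
      * destruct (Nat.ltb_spec (b-3) (2*m-2)); [|lia]. destruct (Nat.ltb_spec (collatz b) 3); [lia|].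
        unfold e. destruct (Nat.eqb_spec m (collatz b)); [reflexivity|lia].
      * destruct (Nat.ltb_spec (b-3) (2*m-2)); destruct (Nat.ltb_spec (collatz b) 3); try reflexivity;
        unfold e; destruct (Nat.eqb_spec m (collatz b)); try reflexivity; lia.
    + intros i Hi. unfold e. destruct (Nat.eqb_spec (3+i) b); destruct (Nat.eqb_spec i (b-3)); try lia.
      * subst b. destruct (collatz (3+i) =? m)%nat; reflexivity.
      * destruct (collatz (3+i) =? m)%nat; reflexivity.
Qed.

Definition sh (n : nat) (x : nat -> C) : nat -> C := Nat.iter n dbl x.
Lemma sh_S n x : sh (S n) x = dbl (sh n x).
Proof. reflexivity. Qed.
Lemma sh_add a b x : sh (a + b) x = sh a (sh b x).
Proof. unfold sh. apply Nat.iter_add. Qed.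
Lemma Z3_sh n x : Z3 x -> Z3 (sh n x).
Proof. intros H; induction n; [exact H|]. rewrite sh_S. apply Z3_dbl; auto. Qed.
Lemma Tn_sh n x : Z3 x -> Tn n (sh n x) = x.
Proof. intros H; induction n; [reflexivity|]. rewrite Tn_S, sh_S, Top_dbl by (apply Z3_sh; auto). exact IHn. Qed.
Lemma Tn_sh_le k n x : Z3 x -> (k <= n)%nat -> Tn k (sh n x) = sh (n-k) x.
Proof. intros H Hk. replace n with (k + (n-k))%nat at 1 by lia. rewrite sh_add. apply Tn_sh. apply Z3_sh; auto. Qed.
Lemma Tn_sh_ge k n x : Z3 x -> (n <= k)%nat -> Tn k (sh n x) = Tn (k-n) x.
Proof. intros H Hk. replace k with ((k-n) + n)%nat at 1 by lia. rewrite Tn_add, Tn_sh; auto. Qed.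

Lemma sh_vanish n x : Z3 x -> forall p, (p < 3 * 2^n)%nat -> sh n x p = 0%C.
Proof. intros H; induction n; intros p Hp.
  - apply H. simpl in Hp; lia.
  - rewrite sh_S. destruct (even_or_odd p) as [[h ->]|[h ->]].
    + rewrite dbl_even. apply IHn. rewrite Nat.pow_succ_r' in Hp. lia.
    + apply dbl_odd. Qed.
Lemma sh_FS n (x : nat -> C) Q : (forall p, (Q <= p)%nat -> x p = 0%C) -> forall p, (2^n * Q <= p)%nat -> sh n x p = 0%C.
Proof. intros H; induction n; intros p Hp.
  - apply H. simpl in Hp; lia.
  - rewrite sh_S. destruct (even_or_odd p) as [[h ->]|[h ->]].
    + rewrite dbl_even. apply IHn. rewrite Nat.pow_succ_r' in Hp. lia.
    + apply dbl_odd. Qed.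

Lemma rsum_dbl (H : C -> nat -> R) x N : (forall p, H 0%C p = 0) ->
  rsum (2*N) (fun p => H (dbl x p) p) = rsum N (fun l => H (x l) (2*l)%nat).
Proof. intros H0. rewrite rsum_double.
  rewrite (rsum_ext N (fun i => H (dbl x (2*i)%nat) (2*i)%nat) (fun l => H (x l) (2*l)%nat)) by (intros; rewrite dbl_even; auto).
  rewrite (rsum_zero N (fun i => H (dbl x (2*i+1)%nat) (2*i+1)%nat)) by (intros; rewrite dbl_odd; auto). lra. Qed.

Lemma rsum_sh n : forall (H : C -> nat -> R) x N, (forall p, H 0%C p = 0) ->
  rsum (2^n * N) (fun p => H (sh n x p) p) = rsum N (fun l => H (x l) (2^n * l)%nat).
Proof. induction n; intros H x N H0.
  - simpl. rewrite Nat.add_0_r. apply rsum_ext. intros. rewrite Nat.add_0_r. reflexivity.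
  - replace (2^S n * N)%nat with (2 * (2^n * N))%nat by (rewrite Nat.pow_succ_r'; lia).
    rewrite (rsum_ext _ (fun p => H (sh (S n) x p) p) (fun p => H (dbl (sh n x) p) p)) by reflexivity.
    rewrite rsum_dbl by auto.
    rewrite (IHn (fun c q => H c (2*q)%nat)) by auto.
    apply rsum_ext. intros. f_equal. rewrite Nat.pow_succ_r'. lia. Qed.

Lemma div_le_aux c o K : 0 < o -> c <= K * o -> c / o <= K.
Proof. intros Ho Hc. replace K with ((K*o)/o) by (field; lra). unfold Rdiv.
  apply Rmult_le_compat_r; [left; apply Rinv_0_lt_compat; auto|auto]. Qed.

Section WithOmega2.
Variable om : nat -> R.
Hypothesis Hpos : forall n, (1 <= n)%nat -> 0 < om n.

Lemma nsq_sh n (y : nat -> C) Q : Z3 y -> (forall p, (Q <= p)%nat -> y p = 0%C) ->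
  in_X om (sh n y) /\ nsq om (sh n y) <= rsum Q (fun l => Cmod (y l) ^ 2 / om (2^n * l)%nat).
Proof. intros Hz HQ. apply nsq_partial; auto. apply Z3_sh; auto. intros m.
  assert (E : rsum (2^n*Q) (wsq om (sh n y)) = rsum Q (fun l => Cmod (y l) ^ 2 / om (2^n * l)%nat)).
  { unfold wsq. apply (rsum_sh n (fun c p => Cmod c ^ 2 / om p)). intros; rewrite Cmod_0. unfold Rdiv; simpl; lra. }
  rewrite <- E. destruct (Nat.le_gt_cases m (2^n*Q)).
  - apply rsum_mono; auto. intros; apply wsq_nonneg; auto. apply Z3_sh; auto.
  - rewrite (rsum_cut m (2^n*Q)); try lra; try lia. intros. unfold wsq. rewrite (sh_FS n y Q HQ) by lia.
    rewrite Cmod_0. unfold Rdiv; simpl; lra. Qed.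

Hypothesis Hlim : forall k, (3 <= k)%nat -> is_lim_seq (fun n => om (k * 2 ^ n)%nat) p_infty.

Lemma sh_small (y : nat -> C) Q : Z3 y -> forall eps, 0 < eps -> exists M, forall n, (M <= n)%nat ->
  rsum Q (fun l => Cmod (y l) ^ 2 / om (2^n * l)%nat) <= eps.
Proof. intros Hz. induction Q; intros eps Heps.
  - exists 0%nat. intros; simpl; lra.
  - destruct (IHQ (eps/2)) as [M1 HM1]; [lra|].
    destruct (Nat.lt_ge_cases Q 3) as [HQ|HQ].
    + exists M1. intros n Hn. cbn [rsum]. rewrite Hz by auto. rewrite Cmod_0.
      specialize (HM1 n Hn). replace (0 ^ 2 / om (2^n*Q)%nat) with 0 by (unfold Rdiv; ring). lra.
    + pose proof (proj2 (is_lim_seq_spec _ _) (Hlim Q HQ)) as L. simpl in L.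
      destruct (L (2 * Cmod (y Q) ^ 2 / eps + 1)) as [M2 HM2].
      exists (Nat.max M1 M2). intros n Hn. cbn [rsum].
      specialize (HM1 n ltac:(lia)). specialize (HM2 n ltac:(lia)).
      rewrite Nat.mul_comm in HM2.
      assert (0 <= 2 * Cmod (y Q) ^ 2 / eps).
      { apply Rdiv_le_0_compat; [|lra]. pose proof (pow2_ge_0 (Cmod (y Q))); lra. }
      assert (Cmod (y Q) ^ 2 / om (2 ^ n * Q)%nat <= eps/2).
      { apply div_le_aux; [lra|].
        assert (2 * Cmod (y Q) ^ 2 / eps * eps = 2 * Cmod (y Q) ^ 2) by (field; lra).
        assert (2 * Cmod (y Q) ^ 2 / eps * eps <= om (2^n*Q)%nat * eps) by (apply Rmult_le_compat_r; lra).
        lra. }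
      lra. Qed.
End WithOmega2.

Definition cit (n j : nat) : nat := Nat.iter n collatz j.
Fixpoint aliveb (N j : nat) : bool :=
  match N with O => (3 <=? j)%nat | S N => (aliveb N j && (3 <=? cit (S N) j))%bool end.

Lemma alive_last N j : aliveb N j = true -> (3 <= cit N j)%nat.
Proof. destruct N; intros H.
  - change ((3 <=? j)%nat = true) in H. apply Nat.leb_le in H. exact H.
  - change ((aliveb N j && (3 <=? cit (S N) j))%bool = true) in H.
    apply andb_prop in H. destruct H as [_ H]. apply Nat.leb_le in H. exact H. Qed.

Lemma Tn_e_alive N j : (3 <= j)%nat -> Tn N (e j) = if aliveb N j then e (cit N j) else zero.
Proof. intros Hj. induction N.
  - change (aliveb 0 j) with (3 <=? j)%nat. destruct (Nat.leb_spec 3 j); [reflexivity|lia].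
  - rewrite Tn_S', IHN. change (aliveb (S N) j) with (aliveb N j && (3 <=? cit (S N) j))%bool. destruct (aliveb N j) eqn:HA.
    + pose proof (alive_last N j HA). rewrite Top_e by auto. rewrite Bool.andb_true_l.
      change (cit (S N) j) with (collatz (cit N j)).
      destruct (Nat.ltb_spec (collatz (cit N j)) 3); destruct (Nat.leb_spec 3 (collatz (cit N j))); try lia; reflexivity.
    + rewrite Bool.andb_false_l. apply Top_zero. Qed.

Lemma cit_mod3 N x : (cit N x mod 3 = 0)%nat -> x = (2^N * cit N x)%nat.
Proof. revert x; induction N; intros x H.
  - simpl. lia.
  - change (cit (S N) x) with (collatz (cit N x)) in *.
    destruct (even_or_odd (cit N x)) as [[h Hh]|[h Hh]]; rewrite Hh in *.
    + rewrite collatz_even in *. assert (cit N x mod 3 = 0)%nat by (rewrite Hh; lia).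
      rewrite (IHN x H0). rewrite Hh. rewrite Nat.pow_succ_r'. lia.
    + rewrite collatz_odd in H. lia. Qed.

Lemma pow2_pos n : (1 <= 2^n)%nat.
Proof. induction n; [simpl; lia|]. rewrite Nat.pow_succ_r'. lia. Qed.

Lemma Tn_e_pow r x : (3 <= x)%nat -> Tn r (e (2^r * x)) = e x.
Proof. revert x; induction r; intros x Hx.
  - simpl. rewrite Nat.add_0_r. reflexivity.
  - rewrite Tn_S. rewrite Nat.pow_succ_r', <- Nat.mul_assoc. rewrite Top_e.
    + rewrite collatz_even. destruct (Nat.ltb_spec (2^r*x) 3).
      * assert (1 <= 2^r)%nat by (apply pow2_pos). nia.
      * apply IHr; auto.
    + assert (1 <= 2^r)%nat by (apply pow2_pos). nia. Qed.

Lemma pow4_mod n : exists q, (4^n = 3*q + 1)%nat.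
Proof. induction n. exists 0%nat; reflexivity. destruct IHn as [q Hq]. exists (4*q+1)%nat.
  rewrite Nat.pow_succ_r'. lia. Qed.

Definition ss (a : nat) : nat := if (a mod 3 =? 2)%nat then 1%nat else 0%nat.
Definition kk (a i : nat) : nat := (2*i + 1 + ss a)%nat.
Definition tt (a i : nat) : nat := ((2^(kk a i + 1) * a - 1) / 3)%nat.
Definition bb (N a i : nat) : nat := (2^(N - kk a i - 1) * tt a i)%nat.

Lemma tt_eq a i : (a mod 3 <> 0)%nat -> (3 * tt a i + 1 = 2^(kk a i + 1) * a)%nat.
Proof. intros Ha. unfold tt, kk, ss.
  assert (Hm : exists m, (2^(2*i + 1 + (if (a mod 3 =? 2)%nat then 1 else 0) + 1) * a = 3*m + 1)%nat).
  { destruct (pow4_mod (i+1)) as [q Hq].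
    replace (2*i + 1 + (if (a mod 3 =? 2)%nat then 1 else 0) + 1)%nat with (2*(i+1) + (if (a mod 3 =? 2)%nat then 1 else 0))%nat by lia.
    rewrite Nat.pow_add_r, Nat.pow_mul_r. replace (2^2)%nat with 4%nat by reflexivity. rewrite Hq.
    destruct (Nat.eqb_spec (a mod 3) 2).
    - simpl. exists (q*2*a + (2*a - 1)/3)%nat.
      assert (a = 3 * (a/3) + 2)%nat by (pose proof (Nat.div_mod a 3); lia).
      set (w := (a/3)%nat) in *. rewrite H. replace (2 * (3 * w + 2) - 1)%nat with (3*(2*w+1))%nat by lia.
      rewrite (Nat.mul_comm 3 (2*w+1)), Nat.div_mul by lia. lia.
    - simpl. exists (q*a + a/3)%nat.
      assert (a = 3 * (a/3) + 1)%nat by (pose proof (Nat.div_mod a 3); pose proof (Nat.mod_upper_bound a 3); lia).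
      set (w := (a/3)%nat) in *. rewrite H. lia. }
  destruct Hm as [m Hm]. rewrite Hm. replace (3*m+1-1)%nat with (m*3)%nat by lia.
  rewrite Nat.div_mul by lia. lia. Qed.

Lemma tt_props a i : (3 <= a)%nat -> (a mod 3 <> 0)%nat ->
  (3 <= tt a i)%nat /\ collatz (tt a i) = (2^(kk a i) * a)%nat.
Proof. intros Ha Hm. pose proof (tt_eq a i Hm) as E.
  assert (Hk : exists k', kk a i = S k') by (exists (2*i + ss a)%nat; unfold kk; lia).
  destruct Hk as [k' Hk]. rewrite Hk in *. replace (S k' + 1)%nat with (S (S k')) in E by lia.
  rewrite !Nat.pow_succ_r' in E. rewrite Nat.pow_succ_r'.
  pose proof (pow2_pos k').
  set (X := (2^k')%nat) in *.
  destruct (even_or_odd (tt a i)) as [[h Hh]|[h Hh]]; rewrite Hh in *.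
  - exfalso. nia.
  - rewrite collatz_odd. split; nia. Qed.

Lemma Tn_bb N a i : (3 <= a)%nat -> (a mod 3 <> 0)%nat -> (kk a i + 1 <= N)%nat ->
  Tn N (e (bb N a i)) = e a.
Proof. intros Ha Hm HN. destruct (tt_props a i Ha Hm) as [Ht Hc].
  unfold bb. replace N with (kk a i + (1 + (N - kk a i - 1)))%nat at 1 by lia.
  rewrite !Tn_add. rewrite Tn_e_pow by auto.
  change (Tn 1 (e (tt a i))) with (Top (e (tt a i))). rewrite Top_e by auto. rewrite Hc.
  pose proof (pow2_pos (kk a i)).
  destruct (Nat.ltb_spec (2 ^ kk a i * a) 3); [nia|]. apply Tn_e_pow; auto. Qed.

Lemma bb_eq N a i : (a mod 3 <> 0)%nat -> (kk a i + 1 <= N)%nat ->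
  (3 * bb N a i + 2^(N - kk a i - 1) = 2^N * a)%nat.
Proof. intros Hm HN. pose proof (tt_eq a i Hm) as E. unfold bb.
  replace (2^N)%nat with (2^(N - kk a i - 1) * 2^(kk a i + 1))%nat by (rewrite <- Nat.pow_add_r; f_equal; lia).
  set (r := (2^(N - kk a i - 1))%nat). rewrite <- Nat.mul_assoc, <- E. lia. Qed.

Lemma bb_inj N a i j : (a mod 3 <> 0)%nat -> (kk a i + 1 <= N)%nat -> (kk a j + 1 <= N)%nat ->
  bb N a i = bb N a j -> i = j.
Proof. intros Hm Hi Hj E. pose proof (bb_eq N a i Hm Hi). pose proof (bb_eq N a j Hm Hj).
  assert (2^(N - kk a i - 1) = 2^(N - kk a j - 1))%nat by lia.
  apply Nat.pow_inj_r in H1; [|lia]. unfold kk in *. lia. Qed.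

Lemma bb_ge3 N a i : (3 <= a)%nat -> (a mod 3 <> 0)%nat -> (3 <= bb N a i)%nat.
Proof. intros Ha Hm. destruct (tt_props a i Ha Hm). unfold bb. pose proof (pow2_pos (N - kk a i - 1)). nia. Qed.

Definition vvec (N L a : nat) : nat -> C :=
  seqsum (S L) (fun i => cscal (RtoC (/ INR (S L))) (e (bb N a i))).

Lemma csum_const n (c : C) : csum n (fun _ => c) = (RtoC (INR n) * c)%C.
Proof. induction n; simpl csum. - simpl. ring. - rewrite IHn, S_INR, RtoC_plus. ring. Qed.

Lemma Tn_vvec N L a : (3 <= a)%nat -> (a mod 3 <> 0)%nat -> (2*L + 4 <= N)%nat ->
  Tn N (vvec N L a) = e a.
Proof. intros Ha Hm HN. unfold vvec. rewrite Tn_seqsum.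
  apply functional_extensionality; intros p. unfold seqsum.
  rewrite (csum_ext _ _ (fun _ => (RtoC (/ INR (S L)) * e a p)%C)).
  - rewrite csum_const. rewrite Cmult_assoc, <- RtoC_mult. rewrite Rinv_r. ring.
    apply not_0_INR; lia.
  - intros i Hi. rewrite Tn_cscal, Tn_bb; auto. unfold kk, ss. destruct (a mod 3 =? 2)%nat; lia. Qed.

Lemma vvec_val N L a p : vvec N L a p = RtoC (/ INR (S L) * rsum (S L) (fun i => if Nat.eqb p (bb N a i) then 1 else 0)).
Proof. unfold vvec, seqsum, cscal. rewrite <- rsum_scal, <- csum_RtoC. apply csum_ext. intros i _.
  unfold e. destruct (Nat.eqb p (bb N a i)); rewrite <- RtoC_mult; f_equal; ring. Qed.

Lemma cnt_le1 (b : nat -> nat) p n : (forall i j, (i < n)%nat -> (j < n)%nat -> b i = b j -> i = j) ->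
  rsum n (fun i => if Nat.eqb p (b i) then 1 else 0) <= 1.
Proof. induction n; intros Hinj; simpl rsum; [lra|].
  destruct (Nat.eqb_spec p (b n)).
  - rewrite rsum_zero; [lra|]. intros i Hi. destruct (Nat.eqb_spec p (b i)); [|reflexivity].
    exfalso. assert (i = n) by (apply Hinj; lia). lia.
  - assert (rsum n (fun i => if Nat.eqb p (b i) then 1 else 0) <= 1) by (apply IHn; intros; apply Hinj; lia). lra. Qed.

Lemma cnt_nonneg (b : nat -> nat) p n : 0 <= rsum n (fun i => if Nat.eqb p (b i) then 1 else 0).
Proof. apply rsum_nonneg. intros; destruct (Nat.eqb p (b i)); lra. Qed.

Section WithOmega3.
Variable om : nat -> R.
Hypothesis Hpos : forall n, (1 <= n)%nat -> 0 < om n.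
Variable delta : R.
Hypothesis Hdelta : 0 < delta.
Hypothesis Hdom : forall n, (1 <= n)%nat -> delta <= om n.

Lemma nsq_vvec N L a : (3 <= a)%nat -> (a mod 3 <> 0)%nat -> (2*L + 4 <= N)%nat ->
  in_X om (vvec N L a) /\ nsq om (vvec N L a) <= / (INR (S L) * delta).
Proof. intros Ha Hm HN.
  set (Lr := INR (S L)). assert (HL : 1 <= Lr) by (unfold Lr; rewrite S_INR; pose proof (pos_INR L); lra).
  set (cnt := fun p => rsum (S L) (fun i => if Nat.eqb p (bb N a i) then 1 else 0)).
  assert (Hinj : forall i j, (i < S L)%nat -> (j < S L)%nat -> bb N a i = bb N a j -> i = j).
  { intros i j Hi Hj. apply bb_inj; auto; unfold kk, ss; destruct (a mod 3 =? 2)%nat; lia. }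
  assert (C1 : forall p, 0 <= cnt p <= 1) by (intros; split; [apply cnt_nonneg|apply cnt_le1; auto]).
  assert (C0 : forall p, (p < 3)%nat -> cnt p = 0).
  { intros p Hp. apply rsum_zero. intros i _. pose proof (bb_ge3 N a i Ha Hm). destruct (Nat.eqb_spec p (bb N a i)); [lia|reflexivity]. }
  assert (Z : Z3 (vvec N L a)).
  { intros p Hp. rewrite vvec_val. fold (cnt p). rewrite C0 by auto. rewrite Rmult_0_r. reflexivity. }
  apply nsq_partial; auto. intros m.
  assert (PW : forall p, wsq om (vvec N L a) p <= / (Lr * Lr * delta) * cnt p).
  { intros p. unfold wsq. rewrite vvec_val. fold Lr. fold (cnt p). rewrite Cmod_R.
    rewrite pow2_abs. destruct (Nat.lt_ge_cases p 3).
    - rewrite C0 by auto. unfold Rdiv. rewrite !Rmult_0_r. simpl. lra.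
    - assert (delta <= om p) by (apply Hdom; lia). specialize (C1 p).
      assert (0 < Lr * Lr * delta) by (apply Rmult_lt_0_compat; nra).
      apply div_le_aux; [lra|].
      replace ((/ Lr * cnt p) ^ 2) with (cnt p * cnt p / (Lr * Lr)) by (field; lra).
      replace (/ (Lr * Lr * delta) * cnt p * om p) with (cnt p * (om p / delta) / (Lr * Lr)) by (field; lra).
      unfold Rdiv. apply Rmult_le_compat_r. left; apply Rinv_0_lt_compat; nra.
      apply Rmult_le_compat_l; [lra|].
      assert (1 <= om p / delta). { apply (Rmult_le_reg_r delta); [lra|]. unfold Rdiv. rewrite Rmult_assoc, Rinv_l; lra. }
      lra. }
  eapply Rle_trans. apply rsum_le. intros; apply PW. rewrite rsum_scal.
  unfold cnt. rewrite rsum_swap.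
  assert (rsum (S L) (fun i => rsum m (fun p => if Nat.eqb p (bb N a i) then 1 else 0)) <= Lr).
  { unfold Lr. rewrite <- (Rmult_1_r (INR (S L))). rewrite <- rsum_const. apply rsum_le. intros i _.
    rewrite rsum_single. destruct (bb N a i <? m)%nat; lra. }
  assert (0 < / (Lr * Lr * delta)) by (apply Rinv_0_lt_compat; apply Rmult_lt_0_compat; nra).
  replace (/ (Lr * delta)) with (/ (Lr * Lr * delta) * Lr) by (field; lra).
  apply Rmult_le_compat_l; lra. Qed.
End WithOmega3.

Definition kapp (N L j : nat) : nat -> C :=
  if aliveb N j then csub (e j) (vvec N L (cit N j)) else e j.

Lemma FS_in_X om (Hpos : forall n, (1 <= n)%nat -> 0 < om n) x Q : Z3 x -> (forall p, (Q <= p)%nat -> x p = 0%C) -> in_X om x.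
Proof. intros Hz HQ. apply (proj1 (nsq_partial om Hpos x (rsum Q (wsq om x)) Hz ltac:(
  intros m; destruct (Nat.le_gt_cases m Q);
  [apply rsum_mono; auto; intros; apply wsq_nonneg; auto
  |rewrite (rsum_cut m Q); [lra|lia|]; intros; unfold wsq; rewrite HQ by lia; rewrite Cmod_0; unfold Rdiv; simpl; ring]))). Qed.

Lemma nsq_zero om (Hpos : forall n, (1 <= n)%nat -> 0 < om n) : in_X om zero /\ nsq om zero <= 0.
Proof. apply nsq_partial; auto. intros n Hn; reflexivity. intros m. rewrite rsum_zero; [lra|].
  intros; unfold wsq, zero. rewrite Cmod_0. unfold Rdiv; simpl; ring. Qed.

Lemma alive_mod3 N j : (3 <= j)%nat -> (j <= N)%nat -> aliveb N j = true -> (cit N j mod 3 <> 0)%nat.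
Proof. intros Hj HN HA Hm. pose proof (alive_last N j HA). pose proof (cit_mod3 N j Hm).
  pose proof (Nat.pow_gt_lin_r 2 N ltac:(lia)). nia. Qed.

Section WithOmega4.
Variable om : nat -> R.
Hypothesis Hpos : forall n, (1 <= n)%nat -> 0 < om n.
Variable delta : R.
Hypothesis Hdelta : 0 < delta.
Hypothesis Hdom : forall n, (1 <= n)%nat -> delta <= om n.

Lemma kapp_props N L j : (3 <= j)%nat -> (j <= N)%nat -> (2*L + 4 <= N)%nat ->
  Tn N (kapp N L j) = zero /\ Z3 (kapp N L j) /\ (exists Q, forall p, (Q <= p)%nat -> kapp N L j p = 0%C) /\
  in_X om (csub (e j) (kapp N L j)) /\ nsq om (csub (e j) (kapp N L j)) <= / (INR (S L) * delta).
Proof. intros Hj HjN HLN. unfold kapp. destruct (aliveb N j) eqn:HA.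
  - set (a := cit N j). assert (Ha : (3 <= a)%nat) by (apply alive_last; auto).
    assert (Hm : (a mod 3 <> 0)%nat) by (apply alive_mod3; auto).
    destruct (nsq_vvec om Hpos delta Hdelta Hdom N L a Ha Hm HLN) as [[Zv Ev] Nv].
    assert (E : csub (e j) (csub (e j) (vvec N L a)) = vvec N L a)
      by (apply functional_extensionality; intros p; unfold csub; ring).
    split; [|split; [|split]].
    + rewrite Tn_csub, Tn_vvec, Tn_e_alive, HA by auto. apply functional_extensionality; intros p; unfold csub, zero; cbv iota; change (cit N j) with a; ring.
    + apply Z3_csub; auto. apply Z3_e; auto.
    + exists (S (j + 2^N * a))%nat. intros p Hp. unfold csub. rewrite vvec_val.
      rewrite rsum_zero. unfold e. destruct (Nat.eqb_spec p j); [lia|]. rewrite Rmult_0_r. ring.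
      intros i Hi. pose proof (bb_eq N a i Hm ltac:(unfold kk, ss; destruct (a mod 3 =? 2)%nat; lia)).
      destruct (Nat.eqb_spec p (bb N a i)); [lia|reflexivity].
    + rewrite E. split; [split|]; auto.
  - assert (E : csub (e j) (e j) = zero) by (apply functional_extensionality; intros p; unfold csub, zero; ring).
    rewrite E. destruct (nsq_zero om Hpos). split; [|split; [|split]].
    + rewrite Tn_e_alive, HA by auto. reflexivity.
    + apply Z3_e; auto.
    + exists (S j). intros p Hp. unfold e. destruct (Nat.eqb_spec p j); [lia|reflexivity].
    + split; auto. assert (0 < / (INR (S L) * delta)).
      { apply Rinv_0_lt_compat, Rmult_lt_0_compat; auto. apply lt_0_INR; lia. } lra. Qed.
End WithOmega4.

Definition stream (x r : nat) : nat := fst (Cantor.of_nat (Nat.iter r (fun z => snd (Cantor.of_nat z)) x)).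
Definition enc (l : list nat) : nat := fold_right (fun h acc => Cantor.to_nat (h, acc)) 0%nat l.

Lemma enc_cons h l : enc (h :: l) = Cantor.to_nat (h, enc l).
Proof. reflexivity. Qed.

Lemma stream_enc l : forall r, (r < length l)%nat -> stream (enc l) r = nth r l 0%nat.
Proof. induction l as [|h l IH]; intros r Hr; simpl in Hr; [lia|].
  destruct r.
  - unfold stream. rewrite enc_cons. change (Nat.iter 0 (fun z => snd (Cantor.of_nat z)) (Cantor.to_nat (h, enc l))) with (Cantor.to_nat (h, enc l)).
    rewrite Cantor.cancel_of_to. reflexivity.
  - unfold stream. rewrite Nat.iter_succ_r. rewrite enc_cons, Cantor.cancel_of_to.
    change (snd (h, enc l)) with (enc l). apply IH. simpl in Hr. lia. Qed.

Lemma stream_surj (h : nat -> nat) n : exists x, forall r, (r < n)%nat -> stream x r = h r.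
Proof. exists (enc (map h (seq 0 n))). intros r Hr. rewrite stream_enc by (rewrite length_map, length_seq; auto).
  rewrite (nth_indep (map h (seq 0 n)) (n:=r) 0%nat (h 0%nat)) by (rewrite length_map, length_seq; auto).
  rewrite map_nth, seq_nth by auto. reflexivity. Qed.

Lemma real_approx (r : R) K : exists A B : nat, Rabs (r - (INR A - INR B) / INR (S K)) <= / INR (S K).
Proof. set (k := INR (S K)). assert (Hk : 0 < k) by (apply lt_0_INR; lia).
  destruct (base_Int_part (r * k)) as [H1 H2]. set (z := Int_part (r * k)) in *.
  assert (Hz : exists A B : nat, INR A - INR B = IZR z).
  { destruct (Z_le_gt_dec 0 z).
    - exists (Z.to_nat z), 0%nat. rewrite (INR_IZR_INZ (Z.to_nat z)), Z2Nat.id by lia. simpl; lra.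
    - exists 0%nat, (Z.to_nat (-z)). rewrite (INR_IZR_INZ (Z.to_nat (-z))), Z2Nat.id by lia. rewrite opp_IZR. simpl; lra. }
  destruct Hz as [A [B HAB]]. exists A, B. rewrite HAB.
  replace (r - IZR z / k) with ((r * k - IZR z) / k) by (field; lra).
  unfold Rdiv. rewrite Rabs_mult, Rabs_inv, (Rabs_right k) by lra.
  rewrite <- (Rmult_1_l (/ k)) at 2. apply Rmult_le_compat_r; [left; apply Rinv_0_lt_compat; auto|].
  apply Rabs_le. lra. Qed.

Definition qc (K x p : nat) : C :=
  (((INR (stream x (4*p)) - INR (stream x (4*p+1))) / INR (S K)),
   ((INR (stream x (4*p+2)) - INR (stream x (4*p+3))) / INR (S K))).

Lemma Cmod_sq_pair (a b : R) : Cmod (a, b) ^ 2 = a ^ 2 + b ^ 2.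
Proof. unfold Cmod. simpl fst; simpl snd. rewrite pow2_sqrt; [reflexivity|].
  pose proof (pow2_ge_0 a); pose proof (pow2_ge_0 b); lra. Qed.

Lemma Cmod_sq_diff (a b c d : R) : Cmod ((a, b) - (c, d))%C ^ 2 = (a - c) ^ 2 + (b - d) ^ 2.
Proof. replace ((a, b) - (c, d))%C with ((a - c, b - d) : C).
  apply Cmod_sq_pair. unfold Cminus, Cplus, Copp. simpl. f_equal; ring. Qed.

Lemma complex_approx (g : nat -> C) K P : exists x, forall p, (p < P)%nat ->
  Cmod (g p - qc K x p) ^ 2 <= 2 * (/ INR (S K)) ^ 2.
Proof.
  assert (Hc : forall p, exists c : nat * nat * nat * nat,
    Rabs (fst (g p) - (INR (fst (fst (fst c))) - INR (snd (fst (fst c)))) / INR (S K)) <= / INR (S K) /\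
    Rabs (snd (g p) - (INR (snd (fst c)) - INR (snd c)) / INR (S K)) <= / INR (S K)).
  { intros p. destruct (real_approx (fst (g p)) K) as [A [B HAB]].
    destruct (real_approx (snd (g p)) K) as [C' [D HCD]]. exists (A, B, C', D). simpl. auto. }
  destruct (choice _ Hc) as [cf Hcf].
  set (h := fun r => match (r mod 4)%nat with
                     | 0 => fst (fst (fst (cf (r/4)%nat)))
                     | 1 => snd (fst (fst (cf (r/4)%nat)))
                     | 2 => snd (fst (cf (r/4)%nat))
                     | _ => snd (cf (r/4)%nat) end).
  destruct (stream_surj h (4*P)) as [x Hx]. exists x. intros p Hp.
  assert (E0 : stream x (4*p) = fst (fst (fst (cf p)))).
  { rewrite Hx by lia. unfold h. replace ((4*p) mod 4)%nat with 0%nat by lia. replace ((4*p)/4)%nat with p by lia. reflexivity. }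
  assert (E1 : stream x (4*p+1) = snd (fst (fst (cf p)))).
  { rewrite Hx by lia. unfold h. replace ((4*p+1) mod 4)%nat with 1%nat by lia. replace ((4*p+1)/4)%nat with p by lia. reflexivity. }
  assert (E2 : stream x (4*p+2) = snd (fst (cf p))).
  { rewrite Hx by lia. unfold h. replace ((4*p+2) mod 4)%nat with 2%nat by lia. replace ((4*p+2)/4)%nat with p by lia. reflexivity. }
  assert (E3 : stream x (4*p+3) = snd (cf p)).
  { rewrite Hx by lia. unfold h. replace ((4*p+3) mod 4)%nat with 3%nat by lia. replace ((4*p+3)/4)%nat with p by lia. reflexivity. }
  unfold qc. rewrite E0, E1, E2, E3. destruct (Hcf p) as [H1 H2].
  destruct (g p) as [gr gi]. simpl in H1, H2.
  rewrite Cmod_sq_diff.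
  set (u := gr - ((INR (fst (fst (fst (cf p)))) - INR (snd (fst (fst (cf p))))) / INR (S K))) in *.
  set (v := gi - ((INR (snd (fst (cf p))) - INR (snd (cf p))) / INR (S K))) in *.
  assert (Rabs u <= / INR (S K)) by exact H1. assert (Rabs v <= / INR (S K)) by exact H2.
  assert (u ^ 2 <= (/ INR (S K)) ^ 2) by (rewrite <- pow2_abs; apply pow_incr; split; [apply Rabs_pos|auto]).
  assert (v ^ 2 <= (/ INR (S K)) ^ 2) by (rewrite <- pow2_abs with (x := v); apply pow_incr; split; [apply Rabs_pos|auto]).
  lra. Qed.

Lemma nat_unbounded r : exists n : nat, r < INR n.
Proof. destruct (archimed r) as [H1 H2]. exists (Z.to_nat (up r)).
  destruct (Z_le_gt_dec 0 (up r)).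
  - rewrite INR_IZR_INZ, Z2Nat.id by auto. lra.
  - assert (IZR (up r) < 0) by (apply IZR_lt; lia). replace (Z.to_nat (up r)) with 0%nat by lia. simpl. lra. Qed.

Lemma csum_sub n (f g : nat -> C) : csum n (fun i => f i - g i)%C = (csum n f - csum n g)%C.
Proof. induction n; simpl; [ring|]. rewrite IHn; ring. Qed.

Lemma Z3_seqsum n X : (forall i, (i < n)%nat -> Z3 (X i)) -> Z3 (seqsum n X).
Proof. intros H p Hp. unfold seqsum. apply csum_zero. intros i Hi. apply H; auto. Qed.
Lemma Z3_cscal c x : Z3 x -> Z3 (cscal c x).
Proof. intros H p Hp. unfold cscal. rewrite H by auto. ring. Qed.
Lemma Z3_zero : Z3 zero.
Proof. intros p _; reflexivity. Qed.
Lemma FS_seqsum n (X : nat -> nat -> C) : (forall i, (i < n)%nat -> exists Q, forall p, (Q <= p)%nat -> X i p = 0%C) ->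
  exists Q, forall p, (Q <= p)%nat -> seqsum n X p = 0%C.
Proof. induction n; intros H.
  - exists 0%nat. intros; reflexivity.
  - destruct IHn as [Q1 HQ1]; [intros; apply H; lia|]. destruct (H n ltac:(lia)) as [Q2 HQ2].
    exists (Nat.max Q1 Q2). intros p Hp. rewrite seqsum_S. unfold cadd. rewrite HQ1, HQ2 by lia. ring. Qed.

Lemma rsum_split_at P m a : (P <= m)%nat -> rsum m a = rsum P a + rsum m (fun p => if (p <? P)%nat then 0 else a p).
Proof. intros H; induction H.
  - rewrite (rsum_zero P (fun p => if (p <? P)%nat then 0 else a p)); [lra|].
    intros i Hi. destruct (Nat.ltb_spec i P); [reflexivity|lia].
  - simpl. rewrite IHle. destruct (Nat.ltb_spec m P); [lia|]. lra. Qed.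

Section WithOmega5.
Variable om : nat -> R.
Hypothesis Hpos : forall n, (1 <= n)%nat -> 0 < om n.
Variable delta : R.
Hypothesis Hdelta : 0 < delta.
Hypothesis Hdom : forall n, (1 <= n)%nat -> delta <= om n.

Lemma nsq_cscal c x : in_X om x -> in_X om (cscal c x) /\ nsq om (cscal c x) <= Cmod c ^ 2 * nsq om x.
Proof. intros Hx. destruct (nsq_comb om Hpos (cscal c x) x x (Cmod c ^ 2) 0) as [H1 H2].
  - exact (Z3_cscal c x (proj1 Hx)).
  - exact Hx. - exact Hx.
  - apply pow2_ge_0.
  - lra.
  - intros p _. unfold cscal. rewrite Cmod_mult, Rpow_mult_distr. lra.
  - split; auto. lra. Qed.

Lemma GLfin n X : (forall p, (p < n)%nat -> in_X om (X p)) ->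
  in_X om (seqsum n X) /\ nsq om (seqsum n X) <= rsum n (fun p => 2 ^ (S p) * nsq om (X p)).
Proof. intros HX. assert (Z : Z3 (seqsum n X)) by (apply Z3_seqsum; intros; exact (proj1 (HX i H))).

  apply nsq_partial; auto. intros m.
  eapply Rle_trans with (rsum m (fun q => rsum n (fun p => 2 ^ (S p) * wsq om (X p) q))).
  - apply rsum_le. intros q _. destruct (Nat.lt_ge_cases q 3).
    + rewrite wsq_Z3 by auto. apply rsum_nonneg. intros p Hp. rewrite wsq_Z3 by (auto; exact (proj1 (HX p Hp))). lra.
    + unfold wsq. assert (0 < om q) by (apply Hpos; lia).
      unfold Rdiv. rewrite (rsum_ext n _ (fun p => / om q * (2 ^ S p * Cmod (X p q) ^ 2))) by (intros; ring).
      rewrite rsum_scal. rewrite Rmult_comm. apply Rmult_le_compat_l; [left; apply Rinv_0_lt_compat; auto|].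
      apply csum_CS.
  - rewrite rsum_swap. apply rsum_le. intros p Hp. rewrite rsum_scal.
    apply Rmult_le_compat_l; [apply pow_le; lra|]. apply nsq_partial_le; auto. Qed.

Definition NNf P L := (P + 2*L + 4)%nat.
Definition ymk P K L x : nat -> C :=
  seqsum P (fun p => if (3 <=? p)%nat then cscal (qc K x p) (kapp (NNf P L) L p) else zero).

Lemma ymk_props P K L x : Z3 (ymk P K L x) /\ (exists Q, forall p, (Q <= p)%nat -> ymk P K L x p = 0%C) /\
  Tn (NNf P L) (ymk P K L x) = zero.
Proof. unfold ymk. split; [|split].
  - apply Z3_seqsum. intros p Hp. destruct (Nat.leb_spec 3 p); [|apply Z3_zero].
    apply Z3_cscal. destruct (kapp_props om Hpos delta Hdelta Hdom (NNf P L) L p) as [_ [Z _]]; auto; unfold NNf; lia.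
  - apply FS_seqsum. intros p Hp. destruct (Nat.leb_spec 3 p); [|exists 0%nat; intros; reflexivity].
    destruct (kapp_props om Hpos delta Hdelta Hdom (NNf P L) L p) as [_ [_ [[Q HQ] _]]]; try (unfold NNf; lia).
    exists Q. intros q Hq. unfold cscal. rewrite HQ by auto. ring.
  - rewrite Tn_seqsum. apply functional_extensionality; intros q. unfold seqsum. apply csum_zero.
    intros p Hp. destruct (Nat.leb_spec 3 p).
    + rewrite Tn_cscal. destruct (kapp_props om Hpos delta Hdelta Hdom (NNf P L) L p) as [T _]; try (unfold NNf; lia).
      rewrite T. unfold cscal, zero. ring.
    + rewrite Tn_zero. reflexivity. Qed.

Definition dP i := fst (Cantor.of_nat (fst (Cantor.of_nat i))).
Definition dK i := fst (Cantor.of_nat (snd (Cantor.of_nat (fst (Cantor.of_nat i))))).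
Definition dL i := fst (Cantor.of_nat (snd (Cantor.of_nat (snd (Cantor.of_nat (fst (Cantor.of_nat i))))))).
Definition dX i := snd (Cantor.of_nat (snd (Cantor.of_nat (snd (Cantor.of_nat (fst (Cantor.of_nat i))))))).
Definition yfam i := ymk (dP i) (dK i) (dL i) (dX i).
Definition Nkf i := NNf (dP i) (dL i).

Lemma yfam_props i : Z3 (yfam i) /\ (exists Q, forall p, (Q <= p)%nat -> yfam i p = 0%C) /\ Tn (Nkf i) (yfam i) = zero.
Proof. apply ymk_props. Qed.

Lemma dense_family g : in_X om g -> forall eps, 0 < eps -> forall R0, exists i, (R0 <= i)%nat /\
  in_X om (csub g (yfam i)) /\ nsq om (csub g (yfam i)) < eps.
Proof.
  intros Hg eps Heps R0. pose proof Hg as [Zg Eg].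
  set (a := wsq om g). set (Sg := nsq om g).
  assert (Ha : forall p, 0 <= a p) by (intros; apply wsq_nonneg; auto).
  assert (Hs : is_lim_seq (sum_n a) Sg) by exact (Series_correct _ Eg).
  pose proof (proj2 (is_lim_seq_spec _ _) Hs (mkposreal (eps/16) ltac:(lra))) as [N0 HN0].
  specialize (HN0 N0 (Nat.le_refl _)). simpl in HN0. rewrite rsum_sum_n in HN0.
  set (P := S N0) in *.
  assert (HP : Sg - rsum P a < eps/16).
  { apply Rabs_def2 in HN0. lra. }
  set (tr := fun p => if (p <? P)%nat then g p else 0%C).
  set (w1 := csub g tr).
  assert (Hw1 : in_X om w1 /\ nsq om w1 <= eps/16).
  { apply nsq_partial; auto.
    - apply Z3_csub; auto. intros p Hp. unfold tr. destruct (p <? P)%nat; [apply Zg; auto|reflexivity].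
    - intros m. assert (E : rsum m (wsq om w1) = rsum m (fun p => if (p <? P)%nat then 0 else a p)).
      { apply rsum_ext. intros p _. unfold w1, csub, tr, a, wsq. destruct (p <? P)%nat.
        - replace (g p - g p)%C with (RtoC 0) by ring. rewrite Cmod_0. unfold Rdiv; simpl; ring.
        - replace (g p - 0)%C with (g p) by ring. reflexivity. }
      rewrite E. destruct (Nat.le_gt_cases P m).
      + pose proof (rsum_split_at P m a H). pose proof (partial_le_series a Ha Eg m). change (Series a) with Sg in H1. lra.
      + rewrite rsum_zero. pose proof (partial_le_series a Ha Eg P). change (Series a) with Sg in H0. lra.
        intros i Hi. destruct (Nat.ltb_spec i P); [reflexivity|lia]. }
  destruct (nat_unbounded (32 * (INR P + 1) / (delta * eps))) as [K HK].
  set (k := INR (S K)).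
  assert (Hk1 : INR K <= k) by (unfold k; rewrite S_INR; lra).
  assert (Hk0 : 1 <= k) by (unfold k; rewrite S_INR; pose proof (pos_INR K); lra).
  destruct (complex_approx g K P) as [x Hx].
  set (qs := fun p => if (p <? P)%nat then (if (3 <=? p)%nat then qc K x p else 0%C) else 0%C).
  set (w2 := csub tr qs).
  assert (Hw2 : in_X om w2 /\ nsq om w2 <= eps/16).
  { assert (Zw2 : Z3 w2).
    { intros p Hp. unfold w2, csub, tr, qs. destruct (p <? P)%nat; [|ring].
      destruct (Nat.leb_spec 3 p); [lia|]. rewrite Zg by auto. ring. }
    set (c := 2 * (/ k) ^ 2 / delta).
    assert (PW : forall p, wsq om w2 p <= if (p <? P)%nat then c else 0).
    { intros p. destruct (Nat.lt_ge_cases p 3). { rewrite wsq_Z3 by auto. destruct (p <? P)%nat; [unfold c; apply Rmult_le_pos; [apply Rmult_le_pos; [lra|apply pow2_ge_0]|left; apply Rinv_0_lt_compat; auto]|lra]. }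
      unfold wsq, w2, csub, tr, qs. destruct (Nat.ltb_spec p P).
      - destruct (Nat.leb_spec 3 p); [|lia]. apply div_le_aux; [apply Hpos; lia|].
        specialize (Hx p H0). fold k in Hx. assert (delta <= om p) by (apply Hdom; lia).
        unfold c. assert (0 <= 2 * (/k)^2) by (apply Rmult_le_pos; [lra|apply pow2_ge_0]).
        replace (2 * (/ k) ^ 2 / delta * om p) with (2 * (/ k) ^ 2 * (om p / delta)) by (field; lra).
        assert (1 <= om p / delta). { apply (Rmult_le_reg_r delta); [lra|]. unfold Rdiv. rewrite Rmult_assoc, Rinv_l; lra. }
        nra.
      - replace (0 - 0)%C with (RtoC 0) by ring. rewrite Cmod_0. unfold Rdiv; simpl. lra. }
    apply nsq_partial; auto. intros m.
    eapply Rle_trans. apply rsum_le. intros; apply PW.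
    assert (Hc : 0 <= c) by (unfold c; apply Rmult_le_pos; [apply Rmult_le_pos; [lra|apply pow2_ge_0]|left; apply Rinv_0_lt_compat; auto]).
    eapply Rle_trans. apply (rsum_mono m (m + P)); [lia|intros; destruct (_ <? _)%nat; lra].
    rewrite (rsum_cut (m+P) P); [|lia|intros; destruct (Nat.ltb_spec i P); [lia|reflexivity]].
    rewrite (rsum_ext P _ (fun _ => c)) by (intros; destruct (Nat.ltb_spec i P); [reflexivity|lia]).
    rewrite rsum_const.
    assert (Hkk : (/ k) ^ 2 <= / k).
    { assert (0 < / k <= 1). { split. apply Rinv_0_lt_compat; lra. rewrite <- Rinv_1. apply Rinv_le_contravar; lra. }
      simpl. nra. }
    assert (Hkbig : 32 * (INR P + 1) / (delta * eps) < k) by lra.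
    assert (H32 : 32 * (INR P + 1) < k * (delta * eps)).
    { apply (Rmult_lt_compat_r (delta * eps)) in Hkbig; [|apply Rmult_lt_0_compat; lra].
      unfold Rdiv in Hkbig. rewrite Rmult_assoc, Rinv_l in Hkbig; [lra|]. apply Rgt_not_eq, Rmult_lt_0_compat; lra. }
    unfold c. pose proof (pos_INR P).
    assert (INR P * (2 * (/k)^2 / delta) <= INR P * (2 * / k / delta)).
    { apply Rmult_le_compat_l; auto. unfold Rdiv. apply Rmult_le_compat_r; [left; apply Rinv_0_lt_compat; lra|lra]. }
    assert (INR P * (2 * / k / delta) <= eps / 16).
    { replace (INR P * (2 * / k / delta)) with (2 * INR P / (k * delta)) by (field; lra).
      apply div_le_aux; [apply Rmult_lt_0_compat; lra|]. nra. }
    lra. }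
  set (Cq := rsum P (fun p => 2 ^ (S p) * Cmod (qc K x p) ^ 2)).
  assert (HCq : 0 <= Cq) by (apply rsum_nonneg; intros; apply Rmult_le_pos; [apply pow_le; lra|apply pow2_ge_0]).
  destruct (nat_unbounded (16 * Cq / (delta * eps))) as [L HL].
  set (y := ymk P K L x).
  set (Zp := fun p => if (3 <=? p)%nat then cscal (qc K x p) (csub (e p) (kapp (NNf P L) L p)) else zero).
  set (w3 := csub qs y).
  assert (Ew3 : w3 = seqsum P Zp).
  { apply functional_extensionality; intros q. unfold w3, csub, y, ymk, seqsum, Zp. symmetry.
    rewrite (csum_ext P _ (fun p => (if (3 <=? p)%nat then (qc K x p * e p q)%C else 0%C) -
          (if (3 <=? p)%nat then cscal (qc K x p) (kapp (NNf P L) L p) else zero) q)%C).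
    2:{ intros p _. destruct (3 <=? p)%nat; unfold cscal, csub, zero; ring. }
    rewrite csum_sub. f_equal. symmetry.
    rewrite (csum_ext P _ (fun p => if Nat.eqb p q then (if (3 <=? q)%nat then qc K x q else 0%C) else 0%C)).
    - rewrite csum_single. unfold qs. destruct (q <? P)%nat; reflexivity.
    - intros p _. unfold e. destruct (Nat.eqb_spec p q); destruct (Nat.eqb_spec q p); try lia.
      + subst. destruct (3 <=? q)%nat; ring.
      + destruct (3 <=? p)%nat; ring. }
  assert (Hw3 : in_X om w3 /\ nsq om w3 <= eps/16).
  { rewrite Ew3.
    assert (HZ : forall p, (p < P)%nat -> in_X om (Zp p) /\ nsq om (Zp p) <= Cmod (qc K x p) ^ 2 * / (INR (S L) * delta)).
    { intros p Hp. unfold Zp. destruct (Nat.leb_spec 3 p).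
      - destruct (kapp_props om Hpos delta Hdelta Hdom (NNf P L) L p) as [_ [_ [_ [HX HN]]]]; try (unfold NNf; lia).
        destruct (nsq_cscal (qc K x p) _ HX) as [H1 H2]. split; auto. eapply Rle_trans; [apply H2|].
        apply Rmult_le_compat_l; [apply pow2_ge_0|auto].
      - destruct (nsq_zero om Hpos) as [HZ1 HZ2]. split; auto.
        assert (0 <= Cmod (qc K x p) ^ 2 * / (INR (S L) * delta)).
        { apply Rmult_le_pos; [apply pow2_ge_0|left; apply Rinv_0_lt_compat, Rmult_lt_0_compat; [apply lt_0_INR; lia|auto]]. }
        lra. }
    destruct (GLfin P Zp (fun p Hp => proj1 (HZ p Hp))) as [G1 G2]. split; auto.
    eapply Rle_trans; [apply G2|].
    eapply Rle_trans. apply rsum_le. intros p Hp. apply Rmult_le_compat_l; [apply pow_le; lra|]. apply (proj2 (HZ p Hp)).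
    rewrite (rsum_ext P _ (fun p => / (INR (S L) * delta) * (2 ^ S p * Cmod (qc K x p) ^ 2))) by (intros; ring).
    rewrite rsum_scal. fold Cq.
    set (Lr := INR (S L)). assert (HLr : INR L <= Lr) by (unfold Lr; rewrite S_INR; lra).
    assert (HLq : 16 * Cq < Lr * (delta * eps)).
    { assert (HH : 16 * Cq / (delta * eps) < Lr) by lra.
      apply (Rmult_lt_compat_r (delta * eps)) in HH; [|apply Rmult_lt_0_compat; lra].
      unfold Rdiv in HH. rewrite Rmult_assoc, Rinv_l in HH; [lra|]. apply Rgt_not_eq, Rmult_lt_0_compat; lra. }
    assert (0 < Lr) by (unfold Lr; apply lt_0_INR; lia).
    replace (/ (Lr * delta) * Cq) with (Cq / (Lr * delta)) by (field; lra).
    apply div_le_aux; [apply Rmult_lt_0_compat; lra|]. nra. }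
  assert (E : csub g y = cadd w1 (cadd w2 w3)).
  { apply functional_extensionality; intros q. unfold w1, w2, w3, csub, cadd. ring. }
  destruct Hw1 as [X1 N1]. destruct Hw2 as [X2 N2]. destruct Hw3 as [X3 N3].
  destruct (nsq_add om Hpos w2 w3 X2 X3) as [X23 N23].
  destruct (nsq_add om Hpos w1 (cadd w2 w3) X1 X23) as [X123 N123].
  exists (Cantor.to_nat (Cantor.to_nat (P, Cantor.to_nat (K, Cantor.to_nat (L, x))), R0)).
  assert (Ey : yfam (Cantor.to_nat (Cantor.to_nat (P, Cantor.to_nat (K, Cantor.to_nat (L, x))), R0)) = y).
  { unfold yfam, dP, dK, dL, dX. repeat (rewrite Cantor.cancel_of_to; cbn [fst snd]). reflexivity. }
  rewrite Ey. split; [|split].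
  - pose proof (Cantor.to_nat_non_decreasing (Cantor.to_nat (P, Cantor.to_nat (K, Cantor.to_nat (L, x)))) R0). lia.
  - rewrite E; auto.
  - rewrite E. lra.
Qed.
End WithOmega5.

Fixpoint nseq (Mf : nat -> nat -> nat) (Nk : nat -> nat) (i : nat) : nat :=
  match i with
  | O => Mf 0%nat 0%nat
  | S i => (nseq Mf Nk i + Nk i + Mf (S i) (nseq Mf Nk i) + 1)%nat end.
Definition prevn Mf Nk i := match i with O => 0%nat | S i => nseq Mf Nk i end.

Lemma nseq_ge_M Mf Nk i : (Mf i (prevn Mf Nk i) <= nseq Mf Nk i)%nat.
Proof. destruct i; simpl; lia. Qed.
Lemma nseq_step Mf Nk i : (nseq Mf Nk i + Nk i + 1 <= nseq Mf Nk (S i))%nat.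
Proof. simpl; lia. Qed.
Lemma nseq_mono Mf Nk i k : (i <= k)%nat -> (nseq Mf Nk i <= nseq Mf Nk k)%nat.
Proof. intros H; induction H; [lia|]. pose proof (nseq_step Mf Nk m). lia. Qed.
Lemma nseq_ge Mf Nk i : (i <= nseq Mf Nk i)%nat.
Proof. induction i; [lia|]. pose proof (nseq_step Mf Nk i). lia. Qed.
Lemma nseq_gap Mf Nk i k : (i < k)%nat -> (nseq Mf Nk i + Nk i <= nseq Mf Nk k)%nat.
Proof. intros H. pose proof (nseq_step Mf Nk i). pose proof (nseq_mono Mf Nk (S i) k H). lia. Qed.
Lemma prevn_ge Mf Nk k i : (k < i)%nat -> (nseq Mf Nk k <= prevn Mf Nk i)%nat.
Proof. intros H. destruct i; [lia|]. simpl. apply nseq_mono. lia. Qed.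

Lemma pow_le_small x i k : 0 <= x <= 1 -> (k <= i)%nat -> x ^ i <= x ^ k.
Proof. intros Hx H; induction H; [lra|]. simpl. assert (0 <= x ^ m) by (apply pow_le; lra). nra. Qed.

Section WithOmega6.
Variable om : nat -> R.
Hypothesis Hpos : forall n, (1 <= n)%nat -> 0 < om n.

Lemma GLinf (F : nat -> nat -> C) (beta : nat -> R) B :
  (forall i p, (p < i)%nat -> F i p = 0%C) -> (forall i, in_X om (F i)) ->
  (forall i, 2 ^ (S i) * nsq om (F i) <= beta i) -> (forall Q, rsum Q beta <= B) ->
  in_X om (fun p => csum (S p) (fun i => F i p)) /\ nsq om (fun p => csum (S p) (fun i => F i p)) <= B.
Proof. intros Hv HX Hb HB. apply nsq_partial; auto.
  - intros p Hp. apply csum_zero. intros i _. apply (proj1 (HX i)); auto.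
  - intros Q. destruct (GLfin om Hpos Q F (fun p _ => HX p)) as [G1 G2].
    rewrite (rsum_ext Q _ (wsq om (seqsum Q F))).
    + eapply Rle_trans. apply nsq_partial_le; auto. eapply Rle_trans; [apply G2|].
      eapply Rle_trans; [|apply (HB Q)]. apply rsum_le. intros; apply Hb.
    + intros p Hp. unfold wsq, seqsum. f_equal. f_equal. f_equal.
      symmetry. apply csum_cut; [lia|]. intros i Hi _. apply Hv. lia. Qed.
End WithOmega6.

Theorem general_part (om : nat -> R) :
  (forall n, (1 <= n)%nat -> 0 < om n) ->
  (exists delta : R, 0 < delta /\ forall n, (1 <= n)%nat -> delta <= om n) ->
  (forall k, (3 <= k)%nat -> is_lim_seq (fun n => om (k * 2 ^ n)%nat) p_infty) ->
  bounded_on_X om -> hypercyclic_on_X om.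
Proof.
  intros Hpos [delta [Hd Hdom]] Hlim [M HM].
  set (K := Rmax 1 (Rabs M)). set (K2 := K ^ 2).
  assert (HK : 1 <= K) by apply Rmax_l.
  assert (HK2 : 1 <= K2) by (unfold K2; nra).
  assert (HT : forall c, in_X om c -> in_X om (Top c) /\ nsq om (Top c) <= K2 * nsq om c).
  { intros c Hc. destruct (HM c Hc) as [H1 H2]. split; auto.
    rewrite !normX_nsq in H2.
    pose proof (nsq_nonneg om Hpos c Hc). pose proof (nsq_nonneg om Hpos (Top c) H1).
    assert (M <= K) by (unfold K; pose proof (Rle_abs M); pose proof (Rmax_r 1 (Rabs M)); lra).
    pose proof (sqrt_pos (nsq om c)). pose proof (sqrt_pos (nsq om (Top c))).
    assert (sqrt (nsq om (Top c)) <= K * sqrt (nsq om c)) by nra.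
    rewrite <- (sqrt_sqrt (nsq om (Top c))) by auto. rewrite <- (sqrt_sqrt (nsq om c)) by auto.
    unfold K2. simpl. nra. }
  assert (HTn : forall n c, in_X om c -> in_X om (Tn n c) /\ nsq om (Tn n c) <= K2 ^ n * nsq om c).
  { induction n; intros c Hc. - simpl. split; auto. lra.
    - rewrite Tn_S'. destruct (IHn c Hc) as [H1 H2]. destruct (HT _ H1) as [H3 H4]. split; auto.
      simpl. pose proof (nsq_nonneg om Hpos _ H1). nra. }
  assert (HMf : forall ic : nat * nat, exists M0, forall m, (M0 <= m)%nat ->
     2 ^ (S (fst ic)) * nsq om (sh m (yfam (fst ic))) <= (/16) ^ (fst ic) / K2 ^ (snd ic)).
  { intros [i c]. simpl fst; simpl snd.
    destruct (yfam_props om Hpos delta Hd Hdom i) as [Z [[Q HQ] _]].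
    assert (Hpe : 0 < (/16) ^ i / K2 ^ c / 2 ^ (S i)).
    { apply Rdiv_lt_0_compat; [apply Rdiv_lt_0_compat|]; apply pow_lt; lra. }
    destruct (sh_small om Hlim (yfam i) Q Z _ Hpe) as [M0 HM0].
    exists M0. intros m Hm. destruct (nsq_sh om Hpos m (yfam i) Q Z HQ) as [_ Hn].
    specialize (HM0 m Hm). assert (0 < 2 ^ S i) by (apply pow_lt; lra).
    replace ((/16) ^ i / K2 ^ c) with (2 ^ S i * ((/16) ^ i / K2 ^ c / 2 ^ S i)) by (field; split; apply pow_nonzero; lra).
    apply Rmult_le_compat_l; lra. }
  destruct (choice _ HMf) as [Mf0 HMf0].
  set (Mf := fun i c => Mf0 (i, c)).
  set (n := nseq Mf Nkf).
  set (s := fun i => sh (n i) (yfam i)).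
  assert (Zy : forall i, Z3 (yfam i)) by (intros i; apply (yfam_props om Hpos delta Hd Hdom i)).
  assert (Xs : forall i, in_X om (s i)).
  { intros i. destruct (yfam_props om Hpos delta Hd Hdom i) as [Z [[Q HQ] _]].
    apply (nsq_sh om Hpos (n i) (yfam i) Q Z HQ). }
  assert (Bs : forall i, 2 ^ (S i) * nsq om (s i) <= (/16) ^ i / K2 ^ (prevn Mf Nkf i)).
  { intros i. apply (HMf0 (i, prevn Mf Nkf i)). exact (nseq_ge_M Mf Nkf i). }
  assert (Vs : forall i p, (p < i)%nat -> s i p = 0%C).
  { intros i p Hp. apply sh_vanish; auto. pose proof (nseq_ge Mf Nkf i).
    pose proof (Nat.pow_gt_lin_r 2 (n i) ltac:(lia)). unfold n in *. lia. }
  set (f := fun p => csum (S p) (fun i => s i p)).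
  assert (HK2p : forall c, 1 <= K2 ^ c) by (intros; apply pow_R1_Rle; lra).
  exists f. split.
  - destruct (GLinf om Hpos s (fun i => (/16) ^ i) 2 Vs Xs) as [H1 H2]; auto.
    + intros i. eapply Rle_trans; [apply Bs|]. specialize (HK2p (prevn Mf Nkf i)).
      assert (0 < (/16)^i) by (apply pow_lt; lra).
      apply div_le_aux; [lra|]. nra.
    + intros Q. apply rsum_geom2. lra.
  - intros g Hg eps Heps.
    destruct (pow_lt_1_zero (/8) ltac:(rewrite Rabs_right; lra) (eps^2/16) ltac:(nra)) as [R0 HR0].
    destruct (dense_family om Hpos delta Hd Hdom g Hg (eps^2/4) ltac:(nra) R0) as [k [Hk [Xk Nk]]].
    exists (n k).
    set (C0 := (/8) ^ k / K2 ^ (n k)).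
    assert (HC0 : 0 < C0) by (apply Rdiv_lt_0_compat; apply pow_lt; lra).
    set (Fk := fun i => if (k <? i)%nat then s i else zero).
    destruct (GLinf om Hpos Fk (fun i => if (k <? i)%nat then (/2) ^ i * C0 else 0) (2 * C0)) as [XB NB].
    { intros i p Hp. unfold Fk. destruct (k <? i)%nat; [apply Vs; auto|reflexivity]. }
    { intros i. unfold Fk. destruct (k <? i)%nat; [apply Xs|apply (nsq_zero om Hpos)]. }
    { intros i. unfold Fk. destruct (Nat.ltb_spec k i).
      - eapply Rle_trans; [apply Bs|]. unfold C0.
        assert (E16 : (/16) ^ i = (/2) ^ i * (/8) ^ i) by (rewrite <- Rpow_mult_distr; f_equal; lra).
        rewrite E16. pose proof (pow_le_small (/8) i k ltac:(lra) ltac:(lia)).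
        pose proof (prevn_ge Mf Nkf k i H). fold n in H1.
        assert (K2 ^ (n k) <= K2 ^ (prevn Mf Nkf i)) by (apply Rle_pow; auto).
        assert (0 < K2 ^ n k) by (apply pow_lt; lra).
        assert (/ K2 ^ (prevn Mf Nkf i) <= / K2 ^ (n k)) by (apply Rinv_le_contravar; auto).
        assert (0 < (/2)^i) by (apply pow_lt; lra). assert (0 < (/8)^i) by (apply pow_lt; lra).
        assert (0 < / K2 ^ (prevn Mf Nkf i)) by (apply Rinv_0_lt_compat; lra).
        unfold Rdiv. rewrite !Rmult_assoc. apply Rmult_le_compat_l; [lra|].
        apply Rmult_le_compat; lra.
      - destruct (nsq_zero om Hpos) as [_ Hz]. assert (0 < 2 ^ S i) by (apply pow_lt; lra). nra. }
    { intros Q. eapply Rle_trans. apply (rsum_le Q _ (fun i => C0 * (/2) ^ i)).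
      intros i _. destruct (k <? i)%nat; [lra|]. assert (0 < (/2)^i) by (apply pow_lt; lra). nra.
      replace (rsum Q (fun i => C0 * (/2)^i)) with (C0 * rsum Q (fun i => (/2)^i)) by (symmetry; apply rsum_scal). pose proof (rsum_geom2 (/2) ltac:(lra) Q). rewrite (Rmult_comm 2 C0). apply Rmult_le_compat_l; lra. }
    set (B := fun p => csum (S p) (fun i => Fk i p)) in *.
    set (A := seqsum (S k) s).
    assert (EfAB : f = cadd A B).
    { apply functional_extensionality; intros p. unfold f, cadd, A, B, seqsum.
      set (low := fun i : nat => (if (k <? i)%nat then RtoC 0 else s i p : C)).
      rewrite (csum_ext (S p) _ (fun i => low i + Fk i p)%C).
      2:{ intros i _. unfold low, Fk, zero. destruct (k <? i)%nat; ring. }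
      rewrite csum_plus. f_equal.
      rewrite <- (csum_cut (S p + S k) (S p) low); [|lia|].
      2:{ intros i Hi _. unfold low. destruct (k <? i)%nat; [reflexivity|apply Vs; lia]. }
      rewrite (csum_cut (S p + S k) (S k) low); [|lia|].
      2:{ intros i Hi _. unfold low. destruct (Nat.ltb_spec k i); [reflexivity|lia]. }
      apply csum_ext. intros i Hi. unfold low. destruct (Nat.ltb_spec k i); [lia|reflexivity]. }
    assert (EA : Tn (n k) A = yfam k).
    { unfold A. rewrite Tn_seqsum. apply functional_extensionality; intros p. unfold seqsum.
      simpl csum. rewrite csum_zero.
      - unfold s. rewrite Tn_sh by auto. ring.
      - intros i Hi. unfold s. rewrite Tn_sh_ge by (auto; apply nseq_mono; lia).
        pose proof (nseq_gap Mf Nkf i k Hi). fold n in H.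
        replace (n k - n i)%nat with ((n k - n i - Nkf i) + Nkf i)%nat by lia.
        rewrite Tn_add. destruct (yfam_props om Hpos delta Hd Hdom i) as [_ [_ T]]. rewrite T, Tn_zero. reflexivity. }
    assert (Ediff : Csub_seq g (Nat.iter (n k) Top f) = csub (csub g (yfam k)) (Tn (n k) B)).
    { rewrite Tn_iter, EfAB, Tn_cadd, EA. apply functional_extensionality; intros p.
      unfold Csub_seq, csub, cadd. ring. }
    rewrite Ediff, normX_nsq.
    destruct (HTn (n k) B XB) as [XTB NTB].
    destruct (nsq_sub om Hpos _ _ Xk XTB) as [_ Nfin].
    assert (K2 ^ n k * (2 * C0) = 2 * (/8)^k).
    { unfold C0. field. apply pow_nonzero. lra. }
    specialize (HR0 k ltac:(lia)). rewrite Rabs_right in HR0 by (apply Rle_ge, pow_le; lra).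
    assert (nsq om (csub (csub g (yfam k)) (Tn (n k) B)) < eps ^ 2).
    { assert (0 <= K2 ^ n k) by (apply pow_le; lra).
      assert (K2 ^ n k * nsq om B <= K2 ^ n k * (2 * C0)) by (apply Rmult_le_compat_l; auto). nra. }
    rewrite <- (sqrt_pow2 eps) by lra. apply sqrt_lt_1_alt. split; auto.
    apply nsq_nonneg; auto. apply nsq_sub; auto.
Qed.

Lemma Top_formula c m : (3 <= m)%nat ->
  Top c m = (c (2*m)%nat + (if (m mod 3 =? 2)%nat then c ((2*m-1)/3)%nat else 0%C))%C.
Proof. intros Hm. rewrite Top_eq. destruct (Nat.ltb_spec m 3); [lia|].
  rewrite (csum_ext _ _ (fun i => (if Nat.eqb i (2*m-3) then c (2*m)%nat else 0%C) +
      (if (m mod 3 =? 2)%nat then (if Nat.eqb i ((2*m-1)/3 - 3) then c ((2*m-1)/3)%nat else 0%C) else 0%C))%C).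
  - rewrite csum_plus, csum_single. destruct (Nat.ltb_spec (2*m-3) (2*m-2)); [|lia].
    f_equal. destruct (Nat.eqb_spec (m mod 3) 2).
    + rewrite csum_single. destruct (Nat.ltb_spec ((2*m-1)/3 - 3) (2*m-2)); [reflexivity|lia].
    + apply csum_zero; reflexivity.
  - intros i Hi. destruct (even_or_odd (3+i)) as [[h Hh]|[h Hh]]; rewrite Hh.
    + rewrite collatz_even. destruct (Nat.eqb_spec h m); destruct (Nat.eqb_spec i (2*m-3)); try lia.
      * subst h. replace (2*m)%nat with (3+i)%nat by lia. rewrite Hh.
        destruct (Nat.eqb_spec (m mod 3) 2); [destruct (Nat.eqb_spec i ((2*m-1)/3-3)); [lia|]|]; ring.
      * destruct (Nat.eqb_spec (m mod 3) 2); [destruct (Nat.eqb_spec i ((2*m-1)/3-3)); [lia|]|]; ring.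
    + rewrite collatz_odd. destruct (Nat.eqb_spec (3*h+2) m); destruct (Nat.eqb_spec i (2*m-3)); try lia.
      * destruct (Nat.eqb_spec (m mod 3) 2); [|lia]. destruct (Nat.eqb_spec i ((2*m-1)/3-3)); [|lia].
        replace ((2*m-1)/3)%nat with (2*h+1)%nat by lia. ring.
      * destruct (Nat.eqb_spec (m mod 3) 2); [destruct (Nat.eqb_spec i ((2*m-1)/3-3)); [lia|]|]; ring.
Qed.

Lemma omega0_pos n : 0 < omega0 n.
Proof. unfold omega0. apply Rdiv_lt_0_compat; [pose proof (pos_INR n); lra|apply PI_RGT_0]. Qed.

Lemma omega0_bounded : bounded_on_X omega0.
Proof.
  assert (Hpos : forall n, (1 <= n)%nat -> 0 < omega0 n) by (intros; apply omega0_pos).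
  exists (sqrt 6). intros c Hc. pose proof Hc as [Zc Ec].
  set (a := wsq omega0 c). set (Sc := nsq omega0 c).
  assert (Ha : forall p, 0 <= a p) by (intros; apply wsq_nonneg; auto).
  assert (HSa : forall n, rsum n a <= Sc) by (intros; apply partial_le_series; auto).
  assert (ZT : Z3 (Top c)) by (intros m Hm; rewrite Top_eq; destruct (Nat.ltb_spec m 3); [reflexivity|lia]).
  set (h1 := fun m => a (2*m)%nat).
  set (h2 := fun m => if (m mod 3 =? 2)%nat then a ((2*m-1)/3)%nat else 0).
  assert (Hh2 : forall m, 0 <= h2 m) by (intros; unfold h2; destruct (_ =? _)%nat; auto; lra).
  assert (PW : forall m, wsq omega0 (Top c) m <= 4 * h1 m + 2 * h2 m).
  { intros m. destruct (Nat.lt_ge_cases m 3).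
    - rewrite wsq_Z3 by auto. pose proof (Ha (2*m)%nat). pose proof (Hh2 m). unfold h1. lra.
    - unfold wsq. rewrite Top_formula by auto.
      eapply Rle_trans. { unfold Rdiv. apply Rmult_le_compat_r; [left; apply Rinv_0_lt_compat, omega0_pos|apply Cmod_sq_add]. }
      assert (W1 : / omega0 m <= 2 * / omega0 (2*m)%nat).
      { unfold omega0. rewrite !Rinv_div. rewrite mult_INR. replace (INR 2) with 2 by reflexivity.
        pose proof (pos_INR m). pose proof PI_RGT_0.
        apply Rle_trans with (2 * (PI / (2 * INR m + 2))); [right; field; lra|].
        apply Rmult_le_compat_l; [lra|]. unfold Rdiv. apply Rmult_le_compat_l; [lra|].
        apply Rinv_le_contravar; lra. }
      assert (A1 : Cmod (c (2*m)%nat) ^ 2 * / omega0 m <= 2 * a (2*m)%nat).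
      { unfold a, wsq. unfold Rdiv. pose proof (pow2_ge_0 (Cmod (c (2*m)%nat))). nra. }
      unfold h1, h2. destruct (Nat.eqb_spec (m mod 3) 2).
      + assert (W2 : / omega0 m <= / omega0 ((2*m-1)/3)%nat).
        { apply Rinv_le_contravar; [apply omega0_pos|]. unfold omega0. unfold Rdiv.
          apply Rmult_le_compat_r; [left; apply Rinv_0_lt_compat, PI_RGT_0|].
          apply Rplus_le_compat_r. apply le_INR. lia. }
        assert (A2 : Cmod (c ((2*m-1)/3)%nat) ^ 2 * / omega0 m <= a ((2*m-1)/3)%nat).
        { unfold a, wsq. unfold Rdiv. pose proof (pow2_ge_0 (Cmod (c ((2*m-1)/3)%nat))). nra. }
        nra.
      + rewrite Cmod_0. replace (0 ^ 2) with 0 by ring. nra. }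
  assert (BT : in_X omega0 (Top c) /\ nsq omega0 (Top c) <= 6 * Sc).
  { apply nsq_partial; auto. intros Q.
    eapply Rle_trans. apply rsum_le. intros; apply PW. rewrite rsum_plus, !rsum_scal.
    assert (R1 : rsum Q h1 <= Sc).
    { eapply Rle_trans; [|apply (HSa (2*Q)%nat)]. rewrite rsum_double. unfold h1.
      pose proof (rsum_nonneg Q (fun i => a (2*i+1)%nat) (fun i _ => Ha _)). lra. }
    assert (R2 : rsum Q h2 <= Sc).
    { eapply Rle_trans. apply (rsum_mono Q (3*Q)); auto; lia.
      rewrite rsum_triple.
      rewrite (rsum_ext Q _ (fun i => a (2*i+1)%nat)).
      - eapply Rle_trans; [|apply (HSa (2*Q)%nat)]. rewrite rsum_double.
        pose proof (rsum_nonneg Q (fun i => a (2*i)%nat) (fun i _ => Ha _)). lra.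
      - intros i _. unfold h2.
        destruct (Nat.eqb_spec ((3*i) mod 3) 2); [lia|].
        destruct (Nat.eqb_spec ((3*i+1) mod 3) 2); [lia|].
        destruct (Nat.eqb_spec ((3*i+2) mod 3) 2); [|lia].
        replace ((2*(3*i+2)-1)/3)%nat with (2*i+1)%nat by lia. lra. }
    lra. }
  destruct BT as [XT NT]. split; auto.
  rewrite !normX_nsq. rewrite <- sqrt_mult_alt by lra. apply sqrt_le_1_alt. exact NT.
Qed.

Lemma omega0_lim k : (3 <= k)%nat -> is_lim_seq (fun n => omega0 (k * 2 ^ n)%nat) p_infty.
Proof. intros Hk. apply is_lim_seq_spec. intros M.
  destruct (nat_unbounded (M * PI)) as [N HN]. exists N. intros n Hn.
  unfold omega0. pose proof PI_RGT_0.
  assert (INR N <= INR (k * 2^n)%nat).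
  { apply le_INR. pose proof (Nat.pow_gt_lin_r 2 n ltac:(lia)). nia. }
  apply (Rmult_lt_reg_r PI); auto. unfold Rdiv. rewrite Rmult_assoc, Rinv_l by lra. lra. Qed.

Theorem theorem3p4 :
  (forall omega : nat -> R,
     (forall n, (1 <= n)%nat -> 0 < omega n) ->
     (exists delta : R, 0 < delta /\ forall n, (1 <= n)%nat -> delta <= omega n) ->
     (forall k, (3 <= k)%nat -> is_lim_seq (fun n => omega (k * 2 ^ n)%nat) p_infty) ->
     bounded_on_X omega ->
     hypercyclic_on_X omega)
  /\ hypercyclic_on_X omega0.
Proof.
  split.
  - intros omega H1 H2 H3 H4. apply general_part; auto.
  - apply general_part.
    + intros; apply omega0_pos.
    + exists (/ PI). split. apply Rinv_0_lt_compat, PI_RGT_0.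
      intros n _. unfold omega0. unfold Rdiv. rewrite <- (Rmult_1_l (/ PI)) at 1.
      apply Rmult_le_compat_r. left; apply Rinv_0_lt_compat, PI_RGT_0. pose proof (pos_INR n); lra.
    + apply omega0_lim.
    + apply omega0_bounded.
Qed.
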